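(* For every integer $l\ge0$ there is a constant $C_l$, depending only on $l,N,r,R$ (and the choice of $\varphi_1$), such that for all integers $k\ge0$ and all $n\in\mathbb{Z}^N$, $$\sum_{j\in\mathbb{Z},\ k\le\sqrt{j}<k+1}|(\Theta_j)_n|^2\le\frac{C_l}{(1+||n|-k|)^l}.$$
   Context: Let $N\ge2$ and $0<r<R\le\pi$. $T^N=(-\pi,\pi]^N$, and functions on $T^N$ are identified with $2\pi$-periodic functions on $\mathbb{R}^N$. Let $\varphi_1:[0,\infty)\to\mathbb{R}$ be a smooth function with $\chi_{(R-r)/3}\le\varphi_1\le\chi_{2(R-r)/3}$, where $\chi_b$ is the characteristic function of $[0,b]$. Put $\varphi_2=1-\varphi_1$, and let $\psi(x)=\varphi_2(|x|)$ for $x\in T^N$, extended $2\pi$-periodically in each variable. Let $\psi_m=(2\pi)^{-N}\int_{T^N}\psi(x)e^{-imx}dx$ be its Fourier coefficients. For $\lambda>0$, let $\theta(x,\lambda)=(2\pi)^{-N}\sum_{|m|^2<\lambda}e^{imx}$. For integers $k\ge0$, let $\theta_k(x)=\theta(x,k)\psi(x)$ and $\Theta_j=\theta_{j+1}-\theta_j$. Let $(\Theta_j)_n=(2\pi)^{-N}\int_{T^N}\Theta_j(x)e^{-inx}dx$; equivalently, $(\Theta_j)_n=(2\pi)^{-N}\sum_{m\in\mathbb{Z}^N,\,|n-m|^2=j}\psi_m$, which is $0$ if there is no such $m$. *)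

(* Defs.v *)
From Stdlib Require Import Reals ZArith List ClassicalEpsilon.
Import ListNotations.
Open Scope R_scope.

Definition smooth_on (D : R -> Prop) (f : R -> R) : Prop :=
  exists F : nat -> R -> R,
    (forall x, F 0%nat x = f x) /\
    (forall (k : nat) (x : R), D x -> derivable_pt_lim (F k) x (F (S k) x)).

(** characteristic function of [0,b] (used for arguments t >= 0) *)
Definition chi (b t : R) : R := if Rle_dec t b then 1 else 0.

(** total Riemann integral: RiemannInt if integrable, 0 otherwise *)
Definition RInt_tot (f : R -> R) (a b : R) : R :=
  match excluded_middle_informative (exists pr : Riemann_integrable f a b, True) with
  | left H => RiemannInt (proj1_sig (constructive_indefinite_description _ H))
  | right _ => 0
  end.

(** iterated integral over the cube [-pi,pi]^n of f : R^n -> R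
    (points of R^n are lists of length n) *)
Fixpoint integ_cube (n : nat) (f : list R -> R) : R :=
  match n with
  | O => f nil
  | S n' => RInt_tot (fun t => integ_cube n' (fun xs => f (t :: xs))) (- PI) PI
  end.

Definition euclid_norm (x : list R) : R :=
  sqrt (fold_right (fun a s => a * a + s) 0 x).
Definition euclid_normZ (m : list Z) : R := euclid_norm (map IZR m).
Definition dotZR (m : list Z) (x : list R) : R :=
  fold_right Rplus 0 (map (fun p => IZR (fst p) * snd p) (combine m x)).

(** lattice points of the box [-K,K]^N (without repetitions) *)
Fixpoint box (N K : nat) : list (list Z) :=
  match N with
  | O => [nil]
  | S N' => flat_map (fun z => map (cons z) (box N' K))
              (map (fun i => (Z.of_nat i - Z.of_nat K)%Z) (seq 0 (2 * K + 1)))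
  end.

Definition sqnormZ (m : list Z) : Z := fold_right (fun a s => a * a + s)%Z 0%Z m.

(** {m in Z^N : |m|^2 < k}  (all such m lie in [-k,k]^N) *)
Definition ball (N k : nat) : list (list Z) :=
  filter (fun m => Z.ltb (sqnormZ m) (Z.of_nat k)) (box N k).

(** complex numbers as pairs (re, im) *)
Definition Cx := (R * R)%type.
Definition Cadd (z w : Cx) : Cx := (fst z + fst w, snd z + snd w).
Definition Csub (z w : Cx) : Cx := (fst z - fst w, snd z - snd w).
Definition Cmul (z w : Cx) : Cx :=
  (fst z * fst w - snd z * snd w, fst z * snd w + snd z * fst w).
Definition Cscal (a : R) (z : Cx) : Cx := (a * fst z, a * snd z).
Definition Cexpi (t : R) : Cx := (cos t, sin t).
Definition Cnorm2 (z : Cx) : R := fst z * fst z + snd z * snd z.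
Definition Csum (l : list Cx) : Cx := fold_right Cadd (0, 0) l.

Definition theta (N k : nat) (x : list R) : Cx :=
  Cscal (/ (2 * PI) ^ N) (Csum (map (fun m => Cexpi (dotZR m x)) (ball N k))).

Definition psi (phi1 : R -> R) (x : list R) : R := 1 - phi1 (euclid_norm x).

Definition theta_k (N : nat) (phi1 : R -> R) (k : nat) (x : list R) : Cx :=
  Cscal (psi phi1 x) (theta N k x).
Definition Theta (N : nat) (phi1 : R -> R) (j : nat) (x : list R) : Cx :=
  Csub (theta_k N phi1 (S j) x) (theta_k N phi1 j x).

Definition Theta_coef (N : nat) (phi1 : R -> R) (j : nat) (n : list Z) : Cx :=
  let g := fun x => Cmul (Theta N phi1 j x) (Cexpi (- dotZR n x)) in
  Cscal (/ (2 * PI) ^ N)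
    (integ_cube N (fun x => fst (g x)), integ_cube N (fun x => snd (g x))).

(** the integers j (necessarily >= 0) with k <= sqrt j < k+1;
    all of them are < (k+1)^2 *)
Definition shell (k : nat) : list nat :=
  filter (fun j => if Rle_dec (INR k) (sqrt (INR j)) then
                     if Rlt_dec (sqrt (INR j)) (INR k + 1) then true else false
                   else false)
         (seq 0 ((k + 1) * (k + 1))).

Definition Rsum (l : list R) : R := fold_right Rplus 0 l.

(* Main.v *)
From Stdlib Require Import Reals ZArith List Lra Lia Psatz ClassicalEpsilon FunctionalExtensionality.
From Coquelicot Require Import Coquelicot.
Require Import Defs.
Import ListNotations.
Open Scope R_scope.

Lemma RInt_tot_eq f a b : ex_RInt f a b -> RInt_tot f a b = RInt f a b.
Proof.
  intros H. unfold RInt_tot. destruct excluded_middle_informative as [e|n].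
  - destruct (constructive_indefinite_description _ e) as [pr HH]. simpl. symmetry. apply RInt_Reals.
  - exfalso. apply n. exists (ex_RInt_Reals_0 _ _ _ H). exact I.
Qed.

Lemma RInt_plusR f g a b : ex_RInt f a b -> ex_RInt g a b ->
  RInt (fun x => f x + g x) a b = RInt f a b + RInt g a b.
Proof. intros. apply (RInt_plus f g); auto. Qed.

Lemma RInt_scalR f c a b : ex_RInt f a b ->
  RInt (fun x => c * f x) a b = c * RInt f a b.
Proof. intros. apply (RInt_scal f a b c); auto. Qed.

Lemma ex_RInt_contR (f : R -> R) a b : (forall z, Rmin a b <= z <= Rmax a b -> continuous f z) -> ex_RInt f a b.
Proof. intros H. apply (ex_RInt_continuous (V:=R_CompleteNormedModule)). exact H. Qed.

Fixpoint ldist (x y : list R) : R :=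
  match x, y with a::x', b::y' => Rabs (a-b) + ldist x' y' | _, _ => 0 end.

Lemma ldist_nonneg x y : 0 <= ldist x y.
Proof. revert y; induction x; destruct y; simpl; try lra. specialize (IHx y). pose proof (Rabs_pos (a-r)). lra. Qed.

Lemma ldist_refl x : ldist x x = 0.
Proof. induction x; simpl; auto. rewrite IHx. replace (a-a) with 0 by ring. rewrite Rabs_R0. ring. Qed.

Definition LipB n (f : list R -> R) K B := 0 <= K /\
  (forall x, length x = n -> Rabs (f x) <= B) /\
  (forall x y, length x = n -> length y = n -> Rabs (f x - f y) <= K * ldist x y).

Lemma Lip_cont (f : R -> R) K x : 0 <= K -> (forall s t, Rabs (f s - f t) <= K * Rabs (s - t)) ->
  continuous f x.
Proof.
  intros HK H. apply continuity_pt_filterlim.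
  intros eps Heps. exists (eps / (K+1)). split.
  - apply Rdiv_lt_0_compat; lra.
  - intros y [_ Hy]. unfold ldist in *; simpl in *; unfold R_dist in *.
    eapply Rle_lt_trans. apply H.
    apply Rle_lt_trans with (K * (eps/(K+1))).
    apply Rmult_le_compat_l; lra.
    apply Rlt_le_trans with ((K+1) * (eps/(K+1))).
    apply Rmult_lt_compat_r. apply Rdiv_lt_0_compat; lra. lra.
    right. field. lra.
Qed.

Lemma integ_ext n f g : (forall x, length x = n -> f x = g x) -> integ_cube n f = integ_cube n g.
Proof.
  revert f g; induction n; intros f g H; simpl.
  - apply H; reflexivity.
  - f_equal. apply functional_extensionality. intro t. apply IHn.
    intros x Hx. apply H. simpl; lia.
Qed.

Lemma LipB_tail n f K B t : LipB (S n) f K B -> LipB n (fun xs => f (t :: xs)) K B.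
Proof.
  intros [H0 [H1 H2]]; split; [lra|split].
  - intros x Hx. apply H1. simpl; lia.
  - intros x y Hx Hy. eapply Rle_trans. apply H2; simpl; lia. simpl.
    replace (t-t) with 0 by ring. rewrite Rabs_R0. lra.
Qed.

Definition TPI := 2 * PI.

Lemma TPI_pos : 0 < TPI.
Proof. unfold TPI. pose proof PI_RGT_0. lra. Qed.

Definition IP (n : nat) : Prop :=
  (forall f K B, LipB n f K B -> Rabs (integ_cube n f) <= TPI ^ n * B) /\
  (forall f g K1 B1 K2 B2, LipB n f K1 B1 -> LipB n g K2 B2 ->
     integ_cube n (fun x => f x + g x) = integ_cube n f + integ_cube n g) /\
  (forall f K B c, LipB n f K B -> integ_cube n (fun x => c * f x) = c * integ_cube n f).

Lemma LipB_plus n f g K1 B1 K2 B2 : LipB n f K1 B1 -> LipB n g K2 B2 ->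
  LipB n (fun x => f x + g x) (K1 + K2) (B1 + B2).
Proof.
  intros [a0 [a1 a2]] [b0 [b1 b2]]; split; [lra|split].
  - intros x Hx. eapply Rle_trans. apply Rabs_triang. specialize (a1 x Hx); specialize (b1 x Hx); lra.
  - intros x y Hx Hy. replace (f x + g x - (f y + g y)) with ((f x - f y) + (g x - g y)) by ring.
    eapply Rle_trans. apply Rabs_triang. specialize (a2 x y Hx Hy); specialize (b2 x y Hx Hy); lra.
Qed.

Lemma LipB_scal n f K B c : LipB n f K B -> LipB n (fun x => c * f x) (Rabs c * K) (Rabs c * B).
Proof.
  intros [a0 [a1 a2]]; split; [apply Rmult_le_pos; [apply Rabs_pos|lra]|split].
  - intros x Hx. rewrite Rabs_mult. apply Rmult_le_compat_l. apply Rabs_pos. auto.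
  - intros x y Hx Hy. replace (c * f x - c * f y) with (c * (f x - f y)) by ring.
    rewrite Rabs_mult, Rmult_assoc. apply Rmult_le_compat_l. apply Rabs_pos. auto.
Qed.

Lemma LipB_K_nonneg n f K B : LipB n f K B -> 0 <= B.
Proof.
  intros [_ [a1 _]]. specialize (a1 (repeat 0 n)). rewrite repeat_length in a1.
  pose proof (Rabs_pos (f (repeat 0 n))). specialize (a1 eq_refl). lra.
Qed.

Lemma IP_all n : IP n.
Proof.
  induction n.
  - split; [|split]; simpl.
    + intros f K B [_ [H _]]. rewrite Rmult_1_l. apply H. reflexivity.
    + reflexivity.
    + reflexivity.
  - destruct IHn as [I1 [I2 I3]].
    assert (Hpar : forall f K B, LipB (S n) f K B -> forall s t,
       Rabs (integ_cube n (fun xs => f (s :: xs)) - integ_cube n (fun xs => f (t :: xs)))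
       <= (TPI ^ n * K) * Rabs (s - t)).
    { intros f K B Hf s t.
      pose proof (LipB_tail n f K B s Hf) as Hs.
      pose proof (LipB_tail n f K B t Hf) as Ht.
      pose proof (LipB_scal _ _ _ _ (-1) Ht) as Ht'.
      rewrite <- Rmult_1_l with (r := integ_cube n (fun xs => f (t :: xs))).
      replace (integ_cube n (fun xs => f (s :: xs)) - 1 * integ_cube n (fun xs => f (t :: xs)))
        with (integ_cube n (fun xs => f (s :: xs)) + (-1) * integ_cube n (fun xs => f (t :: xs))) by ring.
      rewrite <- (I3 _ _ _ (-1) Ht).
      rewrite <- (I2 _ _ _ _ _ _ Hs Ht').
      rewrite Rmult_assoc. apply (I1 _ (K + Rabs (-1) * K)).
      destruct Hf as [h0 [h1 h2]]. split; [rewrite Rabs_m1; lra|split].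
      - intros x Hx. replace (f (s::x) + -1 * f (t::x)) with (f (s::x) - f (t::x)) by ring.
        eapply Rle_trans. apply h2; simpl; lia. simpl. rewrite ldist_refl. lra.
      - intros x y Hx Hy. replace (f (s :: x) + -1 * f (t :: x) - (f (s :: y) + -1 * f (t :: y)))
          with ((f (s::x) - f (s::y)) - (f (t::x) - f (t::y))) by ring.
        eapply Rle_trans. apply Rabs_triang. rewrite Rabs_Ropp.
        assert (HH: forall u, Rabs (f (u :: x) - f (u :: y)) <= K * ldist x y).
        { intro u. eapply Rle_trans. apply h2; simpl; lia. simpl. replace (u-u) with 0 by ring.
          rewrite Rabs_R0. lra. }
        pose proof (HH s); pose proof (HH t). rewrite Rabs_m1. lra. }
    assert (Hex : forall f K B, LipB (S n) f K B ->
        ex_RInt (fun t => integ_cube n (fun xs => f (t :: xs))) (- PI) PI).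
    { intros f K B Hf. apply ex_RInt_contR. intros z _.
      apply Lip_cont with (TPI ^ n * K).
      - apply Rmult_le_pos. apply pow_le. pose proof TPI_pos; lra.
        destruct Hf as [h0 _]. lra.
      - intros; eapply Hpar; eauto. }
    red; split; [|split].
    + intros f K B Hf. simpl. rewrite (RInt_tot_eq _ _ _ (Hex f K B Hf)).
      eapply Rle_trans. apply abs_RInt_le_const.
      pose proof PI_RGT_0; lra. exact (Hex f K B Hf).
      intros t _. apply (I1 _ K). apply (LipB_tail n f K B t Hf).
      unfold TPI. simpl. apply Req_le. ring.
    + intros f g K1 B1 K2 B2 Hf Hg. simpl.
      replace (fun t => integ_cube n (fun xs => f (t :: xs) + g (t :: xs)))
        with (fun t => integ_cube n (fun xs => f (t :: xs)) + integ_cube n (fun xs => g (t :: xs))).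
      2:{ apply functional_extensionality; intro t. symmetry.
          eapply I2; [apply (LipB_tail n f K1 B1 t Hf)|apply (LipB_tail n g K2 B2 t Hg)]. }
      pose proof (Hex f K1 B1 Hf) as E1. pose proof (Hex g K2 B2 Hg) as E2.
      rewrite (RInt_tot_eq _ _ _ E1), (RInt_tot_eq _ _ _ E2).
      rewrite RInt_tot_eq. apply RInt_plusR; assumption.
      apply (ex_RInt_plus (V:=R_NormedModule)); assumption.
    + intros f K B c Hf. simpl.
      replace (fun t => integ_cube n (fun xs => c * f (t :: xs)))
        with (fun t => c * integ_cube n (fun xs => f (t :: xs))).
      2:{ apply functional_extensionality; intro t. symmetry.
          eapply I3; apply (LipB_tail n f K B t Hf). }
      pose proof (Hex f K B Hf) as E1.
      rewrite (RInt_tot_eq _ _ _ E1).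
      rewrite RInt_tot_eq. apply RInt_scalR; assumption.
      apply (ex_RInt_scal (V:=R_NormedModule)); assumption.
Qed.

Lemma Lip1 (f f' : R -> R) M : (forall t, derivable_pt_lim f t (f' t)) -> (forall t, Rabs (f' t) <= M) ->
  forall a b, Rabs (f a - f b) <= M * Rabs (a - b).
Proof.
  intros Hd HM a b.
  destruct (Rtotal_order a b) as [H|[H|H]].
  - destruct (MVT_cor2 f f' a b H (fun c _ => Hd c)) as [c [Hc _]].
    rewrite <- Rabs_Ropp, Ropp_minus_distr, Hc, Rabs_mult, <- (Rabs_Ropp (a-b)), Ropp_minus_distr.
    apply Rmult_le_compat_r. apply Rabs_pos. auto.
  - subst. replace (f b - f b) with 0 by ring. replace (b-b) with 0 by ring. rewrite Rabs_R0. lra.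
  - destruct (MVT_cor2 f f' b a H (fun c _ => Hd c)) as [c [Hc _]].
    rewrite Hc, Rabs_mult. apply Rmult_le_compat_r. apply Rabs_pos. auto.
Qed.

Lemma cos_lip a b : Rabs (cos a - cos b) <= Rabs (a - b).
Proof.
  rewrite <- (Rmult_1_l (Rabs (a-b))). apply (Lip1 cos (fun t => - sin t)).
  apply derivable_pt_lim_cos. intro t. rewrite Rabs_Ropp. apply Rabs_le. apply SIN_bound.
Qed.

Lemma sin_lip a b : Rabs (sin a - sin b) <= Rabs (a - b).
Proof.
  rewrite <- (Rmult_1_l (Rabs (a-b))). apply (Lip1 sin cos).
  apply derivable_pt_lim_sin. intro t. apply Rabs_le. apply COS_bound.
Qed.

Fixpoint sumabs (p : list Z) : R := match p with nil => 0 | a :: q => Rabs (IZR a) + sumabs q end.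

Lemma sumabs_nonneg p : 0 <= sumabs p.
Proof. induction p; simpl; try lra. pose proof (Rabs_pos (IZR a)); lra. Qed.

Lemma dotZR_cons a p t x : dotZR (a :: p) (t :: x) = IZR a * t + dotZR p x.
Proof. reflexivity. Qed.

Lemma dot_lip p x y : length x = length p -> length y = length p ->
  Rabs (dotZR p x - dotZR p y) <= sumabs p * ldist x y.
Proof.
  revert x y; induction p; intros x y Hx Hy; destruct x; destruct y; simpl in *; try lia.
  - unfold dotZR; simpl. replace (0-0) with 0 by ring. rewrite Rabs_R0; lra.
  - rewrite !dotZR_cons.
    replace (IZR a * r + dotZR p x - (IZR a * r0 + dotZR p y)) with
      (IZR a * (r - r0) + (dotZR p x - dotZR p y)) by ring.
    eapply Rle_trans. apply Rabs_triang. rewrite Rabs_mult.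
    specialize (IHp x y ltac:(lia) ltac:(lia)).
    pose proof (sumabs_nonneg p). pose proof (ldist_nonneg x y).
    pose proof (Rabs_pos (IZR a)). pose proof (Rabs_pos (r - r0)).
    nra.
Qed.

Lemma LipB_cosdot n p : length p = n -> LipB n (fun x => cos (dotZR p x)) (sumabs p) 1.
Proof.
  intros Hp. split; [apply sumabs_nonneg|split].
  - intros x _. apply Rabs_le. apply COS_bound.
  - intros x y Hx Hy. eapply Rle_trans. apply cos_lip. apply dot_lip; lia.
Qed.

Lemma LipB_sindot n p : length p = n -> LipB n (fun x => sin (dotZR p x)) (sumabs p) 1.
Proof.
  intros Hp. split; [apply sumabs_nonneg|split].
  - intros x _. apply Rabs_le. apply SIN_bound.
  - intros x y Hx Hy. eapply Rle_trans. apply sin_lip. apply dot_lip; lia.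
Qed.

Lemma LipB_mult n f g K1 B1 K2 B2 : LipB n f K1 B1 -> LipB n g K2 B2 ->
  LipB n (fun x => f x * g x) (B1 * K2 + B2 * K1) (B1 * B2).
Proof.
  intros Hf Hg. pose proof (LipB_K_nonneg _ _ _ _ Hf). pose proof (LipB_K_nonneg _ _ _ _ Hg).
  destruct Hf as [a0 [a1 a2]], Hg as [b0 [b1 b2]]. split; [nra|split].
  - intros x Hx. rewrite Rabs_mult. apply Rmult_le_compat; auto using Rabs_pos.
  - intros x y Hx Hy.
    replace (f x * g x - f y * g y) with (f x * (g x - g y) + g y * (f x - f y)) by ring.
    eapply Rle_trans. apply Rabs_triang. rewrite !Rabs_mult.
    specialize (a1 x Hx). specialize (b1 y Hy). specialize (a2 x y Hx Hy). specialize (b2 x y Hx Hy).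
    pose proof (Rabs_pos (f x)). pose proof (Rabs_pos (g y)). pose proof (ldist_nonneg x y).
    pose proof (Rabs_pos (g x - g y)). pose proof (Rabs_pos (f x - f y)).
    apply Rle_trans with (B1 * (K2 * ldist x y) + B2 * (K1 * ldist x y)).
    apply Rplus_le_compat; apply Rmult_le_compat; auto.
    right; ring.
Qed.

Lemma LipB_weaken n f K B K' B' : LipB n f K B -> K <= K' -> B <= B' -> LipB n f K' B'.
Proof.
  intros [a0 [a1 a2]] HK HB; split; [lra|split].
  - intros; eapply Rle_trans; eauto.
  - intros; eapply Rle_trans; eauto. apply Rmult_le_compat_r; auto using ldist_nonneg.
Qed.

Fixpoint shiftc (i : nat) (h : R) (xs : list R) : list R :=
  match xs with
  | nil => nil
  | x :: r => match i with O => (x + h) :: r | S i' => x :: shiftc i' h r end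
  end.

Lemma shiftc_length i h x : length (shiftc i h x) = length x.
Proof. revert i; induction x; intros [|i]; simpl; auto. Qed.

Lemma shiftc_dist i h x y : ldist (shiftc i h x) (shiftc i h y) = ldist x y.
Proof.
  revert i y; induction x; intros [|i] [|b y]; simpl; auto.
  replace (a + h - (b + h)) with (a - b) by ring. reflexivity. rewrite IHx; reflexivity.
Qed.

Lemma shiftc_comp i h1 h2 x : shiftc i h1 (shiftc i h2 x) = shiftc i (h2 + h1) x.
Proof. revert i; induction x; intros [|i]; simpl; auto. f_equal; ring. f_equal; auto. Qed.

Lemma shiftc_0 i x : shiftc i 0 x = x.
Proof. revert i; induction x; intros [|i]; simpl; auto. rewrite Rplus_0_r; auto. f_equal; auto. Qed.

Lemma shiftc_nth i h x : (i < length x)%nat -> nth i (shiftc i h x) 0 = nth i x 0 + h.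
Proof. revert i; induction x; intros [|i] Hi; simpl in *; try lia; auto. apply IHx; lia. Qed.

Lemma LipB_shift n f K B i h : LipB n f K B -> LipB n (fun x => f (shiftc i h x)) K B.
Proof.
  intros [a0 [a1 a2]]; split; [auto|split].
  - intros x Hx; apply a1; rewrite shiftc_length; auto.
  - intros x y Hx Hy. rewrite <- (shiftc_dist i h). apply a2; rewrite shiftc_length; auto.
Qed.

Lemma dot_shift p i h x : length p = length x -> (i < length x)%nat ->
  dotZR p (shiftc i h x) = dotZR p x + IZR (nth i p 0%Z) * h.
Proof.
  revert p i; induction x; intros [|a0 p] [|i] Hl Hi; simpl in *; try lia.
  - unfold dotZR; simpl. ring.
  - rewrite !dotZR_cons. rewrite IHx by lia. ring.
Qed.

Lemma par_lip n f K B : LipB (S n) f K B -> forall s t,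
  Rabs (integ_cube n (fun xs => f (s :: xs)) - integ_cube n (fun xs => f (t :: xs)))
       <= (TPI ^ n * K) * Rabs (s - t).
Proof.
  intros Hf s t. destruct (IP_all n) as [I1 [I2 I3]].
  pose proof (LipB_tail n f K B s Hf) as Hs.
  pose proof (LipB_tail n f K B t Hf) as Ht.
  pose proof (LipB_scal _ _ _ _ (-1) Ht) as Ht'.
  replace (integ_cube n (fun xs => f (s :: xs)) - integ_cube n (fun xs => f (t :: xs)))
    with (integ_cube n (fun xs => f (s :: xs)) + (-1) * integ_cube n (fun xs => f (t :: xs))) by ring.
  rewrite <- (I3 _ _ _ (-1) Ht).
  rewrite <- (I2 _ _ _ _ _ _ Hs Ht').
  rewrite Rmult_assoc. apply (I1 _ (K + Rabs (-1) * K)).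
  destruct Hf as [h0 [h1 h2]]. split; [rewrite Rabs_m1; lra|split].
  - intros x Hx. replace (f (s::x) + -1 * f (t::x)) with (f (s::x) - f (t::x)) by ring.
    eapply Rle_trans. apply h2; simpl; lia. simpl. rewrite ldist_refl. lra.
  - intros x y Hx Hy. replace (f (s :: x) + -1 * f (t :: x) - (f (s :: y) + -1 * f (t :: y)))
      with ((f (s::x) - f (s::y)) - (f (t::x) - f (t::y))) by ring.
    eapply Rle_trans. apply Rabs_triang. rewrite Rabs_Ropp.
    assert (HH: forall u, Rabs (f (u :: x) - f (u :: y)) <= K * ldist x y).
    { intro u. eapply Rle_trans. apply h2; simpl; lia. simpl. replace (u-u) with 0 by ring.
      rewrite Rabs_R0. lra. }
    pose proof (HH s); pose proof (HH t). rewrite Rabs_m1. lra.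
Qed.

Lemma par_ex n f K B a b : LipB (S n) f K B ->
  ex_RInt (fun t => integ_cube n (fun xs => f (t :: xs))) a b.
Proof.
  intros Hf. apply ex_RInt_contR. intros z _.
  apply Lip_cont with (TPI ^ n * K).
  - apply Rmult_le_pos. apply pow_le. pose proof TPI_pos; lra. destruct Hf; lra.
  - intros; eapply par_lip; eauto.
Qed.

Lemma integ_zero n : integ_cube n (fun _ => 0) = 0.
Proof.
  induction n; simpl; auto. rewrite IHn.
  rewrite RInt_tot_eq. rewrite RInt_const. unfold scal; simpl; unfold mult; simpl; ring.
  apply ex_RInt_contR. intros; apply continuous_const.
Qed.

Lemma RInt_zero_on (G : R -> R) a b : (forall t, Rmin a b <= t <= Rmax a b -> G t = 0) -> RInt G a b = 0.
Proof.
  intros H. rewrite (RInt_ext G (fun _ => 0)). rewrite RInt_const. unfold scal; simpl; unfold mult; simpl; ring.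
  intros; apply H; lra.
Qed.

Lemma shift_integ n : forall i h F K B, (i < n)%nat -> Rabs h <= PI -> LipB n F K B ->
  (forall x, length x = n -> PI - Rabs h <= Rabs (nth i x 0) -> F x = 0) ->
  integ_cube n F = integ_cube n (fun x => F (shiftc i h x)).
Proof.
  induction n; intros i h F K B Hi Hh HF Hv; [lia|].
  destruct i as [|i].
  - simpl.
    set (G := fun t => integ_cube n (fun xs => F (t :: xs))).
    change (RInt_tot G (- PI) PI = RInt_tot (fun t => G (t + h)) (- PI) PI).
    assert (HG : forall a b, ex_RInt G a b) by (intros; eapply par_ex; eauto).
    assert (HGs : forall a b, ex_RInt (fun t => G (t + h)) a b).
    { intros. apply ex_RInt_contR. intros z _.
      apply Lip_cont with (TPI ^ n * K).
      - apply Rmult_le_pos. apply pow_le. pose proof TPI_pos; lra. destruct HF; lra.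
      - intros s t. unfold G. eapply Rle_trans. eapply par_lip; eauto.
        replace (s + h - (t + h)) with (s - t) by ring. lra. }
    assert (HG0 : forall t, PI - Rabs h <= Rabs t -> G t = 0).
    { intros t Ht. unfold G. rewrite <- (integ_zero n). apply integ_ext.
      intros x Hx. apply Hv. simpl; lia. simpl. auto. }
    rewrite !RInt_tot_eq by auto.
    assert (E : RInt (fun t => G (t + h)) (- PI) PI = RInt G (-PI + h) (PI + h)).
    { replace (-PI + h) with (1 * -PI + h) by ring. replace (PI + h) with (1 * PI + h) by ring.
      rewrite <- (RInt_comp_lin G 1 h (-PI) PI).
      - apply RInt_ext. intros. unfold scal; simpl; unfold mult; simpl. rewrite Rmult_1_l. f_equal. ring.
      - auto. }
    rewrite E. pose proof PI_RGT_0.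
    rewrite <- (RInt_Chasles G (-PI+h) (-PI) (PI + h)) by auto.
    rewrite <- (RInt_Chasles G (-PI) PI (PI + h)) by auto.
    unfold plus; simpl.
    rewrite (RInt_zero_on G (-PI + h) (-PI)).
    rewrite (RInt_zero_on G PI (PI + h)). unfold plus; simpl; lra.
    + intros t Ht. apply HG0. unfold Rmin, Rmax, Rabs in *. repeat destruct Rle_dec; repeat destruct Rcase_abs; lra.
    + intros t Ht. apply HG0. unfold Rmin, Rmax, Rabs in *. repeat destruct Rle_dec; repeat destruct Rcase_abs; lra.
  - simpl. f_equal. apply functional_extensionality. intro t.
    apply (IHn i h (fun xs => F (t :: xs)) K B). lia. auto. apply LipB_tail; auto.
    intros x Hx Hn. apply Hv. simpl; lia. simpl. auto.
Qed.

Lemma cont_cosZ (k : R) z : continuous (fun t => cos (k * t)) z.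
Proof.
  apply continuity_pt_filterlim. apply derivable_continuous_pt.
  apply derivable_pt_comp. apply derivable_pt_scal. apply derivable_pt_id. apply derivable_pt_cos.
Qed.
Lemma cont_sinZ (k : R) z : continuous (fun t => sin (k * t)) z.
Proof.
  apply continuity_pt_filterlim. apply derivable_continuous_pt.
  apply derivable_pt_comp. apply derivable_pt_scal. apply derivable_pt_id. apply derivable_pt_sin.
Qed.

Lemma sin_kPI k : sin (IZR k * PI) = 0.
Proof. apply sin_eq_0_1. exists k. reflexivity. Qed.

Lemma RInt_cosZ k : RInt (fun t => cos (IZR k * t)) (-PI) PI = if Z.eq_dec k 0 then TPI else 0.
Proof.
  destruct (Z.eq_dec k 0).
  - subst. rewrite (RInt_ext _ (fun _ => 1)). rewrite RInt_const. unfold scal; simpl; unfold mult; simpl.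
    unfold TPI; ring. intros. rewrite Rmult_0_l, cos_0. reflexivity.
  - assert (Hk : IZR k <> 0) by (apply not_0_IZR; auto).
    apply is_RInt_unique.
    replace 0 with (minus (sin (IZR k * PI) / IZR k) (sin (IZR k * - PI) / IZR k)).
    apply (is_RInt_derive (V:=R_CompleteNormedModule) (fun t => sin (IZR k * t) / IZR k)).
    + intros x _. auto_derive. auto. field. auto.
    + intros; apply cont_cosZ.
    + unfold minus, plus, opp; simpl. rewrite Ropp_mult_distr_r_reverse, sin_neg, sin_kPI. field. auto.
Qed.

Lemma RInt_sinZ k : RInt (fun t => sin (IZR k * t)) (-PI) PI = 0.
Proof.
  destruct (Z.eq_dec k 0).
  - subst. rewrite (RInt_ext _ (fun _ => 0)). rewrite RInt_const. unfold scal; simpl; unfold mult; simpl.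
    ring. intros. rewrite Rmult_0_l, sin_0. reflexivity.
  - assert (Hk : IZR k <> 0) by (apply not_0_IZR; auto).
    apply is_RInt_unique.
    replace 0 with (minus (- cos (IZR k * PI) / IZR k) (- cos (IZR k * - PI) / IZR k)).
    apply (is_RInt_derive (V:=R_CompleteNormedModule) (fun t => - cos (IZR k * t) / IZR k)).
    + intros x _. auto_derive. auto. field. auto.
    + intros; apply cont_sinZ.
    + unfold minus, plus, opp; simpl. rewrite Ropp_mult_distr_r_reverse, cos_neg. field. auto.
Qed.

Definition allz (p : list Z) : bool := forallb (fun z => Z.eqb z 0) p.

Lemma dotZR_nil x : dotZR nil x = 0.
Proof. reflexivity. Qed.

Lemma cube_trig n : forall p, length p = n ->
  integ_cube n (fun x => cos (dotZR p x)) = (if allz p then TPI ^ n else 0) /\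
  integ_cube n (fun x => sin (dotZR p x)) = 0.
Proof.
  induction n; intros p Hp.
  - destruct p; simpl in Hp; try lia. simpl. rewrite dotZR_nil, cos_0, sin_0. auto.
  - destruct p as [|a q]; simpl in Hp; try lia.
    destruct (IHn q ltac:(lia)) as [Hc Hs].
    destruct (IP_all n) as [I1 [I2 I3]].
    assert (E : forall F G : R -> R -> R -> R,
      (forall t d, F t d = G t d) -> True) by auto.
    pose proof (LipB_cosdot n q ltac:(lia)) as Lc.
    pose proof (LipB_sindot n q ltac:(lia)) as Ls.
    set (Cq := integ_cube n (fun x => cos (dotZR q x))) in *.
    assert (Ec : forall t, integ_cube n (fun xs => cos (dotZR (a :: q) (t :: xs))) = cos (IZR a * t) * Cq).
    { intro t. rewrite (integ_ext n _ (fun xs => cos (IZR a * t) * cos (dotZR q xs) + (- sin (IZR a * t)) * sin (dotZR q xs))).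
      rewrite (I2 _ _ _ _ _ _ (LipB_scal _ _ _ _ (cos (IZR a * t)) Lc) (LipB_scal _ _ _ _ (- sin (IZR a * t)) Ls)).
      rewrite (I3 _ _ _ _ Lc), (I3 _ _ _ _ Ls), Hs. fold Cq. ring.
      intros x _. rewrite dotZR_cons, cos_plus. ring. }
    assert (Es : forall t, integ_cube n (fun xs => sin (dotZR (a :: q) (t :: xs))) = sin (IZR a * t) * Cq).
    { intro t. rewrite (integ_ext n _ (fun xs => sin (IZR a * t) * cos (dotZR q xs) + (cos (IZR a * t)) * sin (dotZR q xs))).
      rewrite (I2 _ _ _ _ _ _ (LipB_scal _ _ _ _ (sin (IZR a * t)) Lc) (LipB_scal _ _ _ _ (cos (IZR a * t)) Ls)).
      rewrite (I3 _ _ _ _ Lc), (I3 _ _ _ _ Ls), Hs. fold Cq. ring.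
      intros x _. rewrite dotZR_cons, sin_plus. ring. }
    simpl integ_cube. rewrite (functional_extensionality _ _ Ec), (functional_extensionality _ _ Es).
    assert (X1 : ex_RInt (fun t => cos (IZR a * t)) (-PI) PI) by (apply ex_RInt_contR; intros; apply cont_cosZ).
    assert (X2 : ex_RInt (fun t => sin (IZR a * t)) (-PI) PI) by (apply ex_RInt_contR; intros; apply cont_sinZ).
    rewrite !RInt_tot_eq.
    2: { apply ex_RInt_contR; intros. apply (continuous_mult (K:=R_AbsRing)). apply cont_sinZ. apply continuous_const. }
    2: { apply ex_RInt_contR; intros. apply (continuous_mult (K:=R_AbsRing)). apply cont_cosZ. apply continuous_const. }
    rewrite (RInt_ext (fun t => cos (IZR a * t) * Cq) (fun t => Cq * cos (IZR a * t))) by (intros; simpl; ring).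
    rewrite (RInt_ext (fun t => sin (IZR a * t) * Cq) (fun t => Cq * sin (IZR a * t))) by (intros; simpl; ring).
    rewrite !RInt_scalR by auto. rewrite RInt_cosZ, RInt_sinZ. split; [|ring].
    rewrite Hc. simpl allz. destruct (Z.eq_dec a 0); subst; simpl.
    + destruct (allz q); simpl; ring.
    + destruct (Z.eqb_spec a 0); [contradiction|]. simpl. ring.
Qed.

Inductive sx := EF (j : nat) | EG (i : nat) | EC (c : R) | EA (a b : sx) | EM (a b : sx).

Fixpoint ev (F G : nat -> R -> R) (e : sx) (t : R) : R :=
  match e with
  | EF j => F j (G 0%nat t)
  | EG i => G i t
  | EC c => c
  | EA a b => ev F G a t + ev F G b t
  | EM a b => ev F G a t * ev F G b t
  end.

Fixpoint dx (e : sx) : sx :=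
  match e with
  | EF j => EM (EF (S j)) (EG 1)
  | EG i => EG (S i)
  | EC _ => EC 0
  | EA a b => EA (dx a) (dx b)
  | EM a b => EA (EM (dx a) b) (EM a (dx b))
  end.

Fixpoint dxn (k : nat) : sx := match k with O => EF 0 | S k' => dx (dxn k') end.

Lemma dx_ok F G t :
  (forall j, derivable_pt_lim (F j) (G 0%nat t) (F (S j) (G 0%nat t))) ->
  (forall i, derivable_pt_lim (G i) t (G (S i) t)) ->
  forall e, derivable_pt_lim (ev F G e) t (ev F G (dx e) t).
Proof.
  intros HF HG. induction e; simpl.
  - apply (derivable_pt_lim_comp (G 0%nat) (F j)). apply HG. apply HF.
  - apply HG.
  - apply derivable_pt_lim_const.
  - apply (derivable_pt_lim_plus (ev F G e1) (ev F G e2)); auto.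
  - exact (derivable_pt_lim_mult (ev F G e1) (ev F G e2) t _ _ IHe1 IHe2).
Qed.

Fixpoint eb (MF MG : nat -> R) (e : sx) : R :=
  match e with
  | EF j => MF j
  | EG i => MG i
  | EC c => Rabs c
  | EA a b => eb MF MG a + eb MF MG b
  | EM a b => eb MF MG a * eb MF MG b
  end.

Lemma eb_ok F G MF MG t :
  (forall j, Rabs (F j (G 0%nat t)) <= MF j) -> (forall i, Rabs (G i t) <= MG i) ->
  forall e, Rabs (ev F G e t) <= eb MF MG e.
Proof.
  intros HF HG. induction e; simpl; auto. lra.
  - eapply Rle_trans. apply Rabs_triang. lra.
  - rewrite Rabs_mult. apply Rmult_le_compat; auto using Rabs_pos.
Qed.

Lemma eb_nonneg MF MG : (forall j, 0 <= MF j) -> (forall i, 0 <= MG i) -> forall e, 0 <= eb MF MG e.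
Proof. intros H1 H2; induction e; simpl; auto. apply Rabs_pos. lra. nra. Qed.

Fixpoint linF (P : nat -> Prop) (e : sx) : Prop :=
  match e with
  | EF j => P j
  | EG _ => False
  | EC _ => False
  | EA a b => linF P a /\ linF P b
  | EM a b => linF P a \/ linF P b
  end.

Lemma linF_zero P F G t : (forall j, P j -> F j (G 0%nat t) = 0) -> forall e, linF P e -> ev F G e t = 0.
Proof.
  intros H; induction e; simpl; intros L; try contradiction.
  - auto.
  - destruct L; rewrite IHe1, IHe2; auto; ring.
  - destruct L as [L|L]; [rewrite IHe1|rewrite IHe2]; auto; ring.
Qed.

Lemma linF_dx (P : nat -> Prop) : (forall j, P j -> P (S j)) -> forall e, linF P e -> linF P (dx e).
Proof. intros HP; induction e; simpl; intros L; try contradiction; auto; tauto. Qed.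

Lemma linF_dxn_all k : linF (fun _ => True) (dxn k).
Proof. induction k; simpl; auto. apply linF_dx; auto. Qed.

Lemma linF_dxn_1 k : (1 <= k)%nat -> linF (fun j => (1 <= j)%nat) (dxn k).
Proof.
  induction k; intros Hk; [lia|]. simpl. destruct k.
  - simpl. left. lia.
  - apply linF_dx. intros; lia. apply IHk; lia.
Qed.

Fixpoint cst (i : nat) : R := match i with O => /2 | S i' => cst i' * (- INR (2 * i' + 1) / 2) end.

Definition Gs (i : nat) (s : R) : R :=
  match i with O => sqrt s | S i' => cst i' * (/ sqrt s) ^ (2 * i' + 1) end.

Lemma Gs_der i s : 0 < s -> derivable_pt_lim (Gs i) s (Gs (S i) s).
Proof.
  intros Hs. apply is_derive_Reals. pose proof (sqrt_lt_R0 s Hs) as Hq.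
  destruct i.
  - unfold Gs. auto_derive. lra. simpl. field. lra.
  - change (Gs (S i)) with (fun s => cst i * (/ sqrt s) ^ (2 * i + 1)).
    change (Gs (S (S i)) s) with (cst (S i) * (/ sqrt s) ^ (2 * S i + 1)).
    auto_derive. repeat split; lra.
    replace (Init.Nat.pred (2 * i + 1)) with (2 * i)%nat by lia.
    replace (2 * S i + 1)%nat with (2 * i + 3)%nat by lia.
    rewrite pow_add. simpl cst.
    replace (Init.Nat.pred (i + (i + 0) + 1)) with (2 * i)%nat by lia.
    replace (i + (i + 0) + 1)%nat with (2 * i + 1)%nat by lia.
    replace (/ (2 * sqrt s)) with (/ 2 * / sqrt s) by (field; lra).
    replace (/ (sqrt s * sqrt s)) with (/ sqrt s * / sqrt s) by (field; lra).
    set (u := / sqrt s). set (w := u ^ (2 * i)). 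
    set (K := INR (2 * i + 1)). simpl pow.
    match goal with |- ?a = ?b => change (@eq R a b) end. field.
Qed.

Definition PhiHyp (phi1 : R -> R) (F : nat -> R -> R) (d1 d2 : R) : Prop :=
  0 < d1 /\ d1 <= d2 /\ (forall x, F 0%nat x = phi1 x) /\
  (forall k x, 0 < x -> derivable_pt_lim (F k) x (F (S k) x)) /\
  (forall t, 0 <= t <= d1 -> phi1 t = 1) /\ (forall t, d2 < t -> phi1 t = 0) /\
  (forall t, 0 <= t -> 0 <= phi1 t <= 1).

Definition cc (k : nat) : R := match k with O => 1 | _ => 0 end.

Lemma deriv_const_loc f x a b c l : a < x < b -> (forall z, a < z < b -> f z = c) ->
  derivable_pt_lim f x l -> l = 0.
Proof.
  intros Hx Hz Hd.
  assert (H1 : derivable_pt_lim (fun _ => c) x l).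
  { apply (derivable_pt_lim_locally_ext f _ x a b l Hx); auto. }
  eapply uniqueness_limite. exact H1. apply derivable_pt_lim_const.
Qed.


Lemma V1 phi1 F d1 d2 : PhiHyp phi1 F d1 d2 -> forall j t, d2 < t -> F j t = 0.
Proof.
  intros (Hd1 & Hd12 & HF0 & HFd & Hlo & Hhi & Hb).
  induction j; intros t Ht.
  - rewrite HF0; auto.
  - apply (deriv_const_loc (F j) t d2 (t+1) 0). lra.
    intros; apply IHj; lra. apply HFd. lra.
Qed.

Lemma V2 phi1 F d1 d2 : PhiHyp phi1 F d1 d2 -> forall j t, 0 < t < d1 -> F j t = cc j.
Proof.
  intros (Hd1 & Hd12 & HF0 & HFd & Hlo & Hhi & Hb).
  induction j; intros t Ht.
  - rewrite HF0; simpl; apply Hlo; lra.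
  - simpl. apply (deriv_const_loc (F j) t 0 d1 (cc j)). lra.
    intros; apply IHj; lra. apply HFd. lra.
Qed.

Definition Psi0 (F : nat -> R -> R) (k : nat) (s : R) : R := ev F Gs (dxn k) s.
Definition Psi (F : nat -> R -> R) (k : nat) (s : R) : R :=
  if Rle_dec s 0 then cc k else Psi0 F k s.

Lemma sqrt_lt_d s d : 0 <= s -> 0 < d -> s < d * d -> sqrt s < d.
Proof. intros. rewrite <- (sqrt_square d) by lra. apply sqrt_lt_1_alt. lra. Qed.

Lemma sqrt_gt_d s d : 0 <= d -> d * d < s -> d < sqrt s.
Proof. intros. rewrite <- (sqrt_square d) by lra. apply sqrt_lt_1_alt. nra. Qed.

Lemma Psi0_low phi1 F d1 d2 : PhiHyp phi1 F d1 d2 -> forall k s, 0 < s < d1 * d1 -> Psi0 F k s = cc k.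
Proof.
  intros H k s Hs. pose proof H as (Hd1 & Hd12 & HF0 & HFd & Hlo & Hhi & Hb).
  assert (Hq : 0 < sqrt s < d1) by (split; [apply sqrt_lt_R0; lra| apply sqrt_lt_d; lra]).
  destruct k.
  - unfold Psi0; simpl. apply (V2 _ _ _ _ H 0). auto.
  - unfold Psi0. simpl cc. apply linF_zero with (P := fun j => (1 <= j)%nat).
    intros j Hj. simpl. destruct j; [lia|]. apply (V2 _ _ _ _ H (S j)). auto.
    apply linF_dxn_1; lia.
Qed.

Lemma Psi0_high phi1 F d1 d2 : PhiHyp phi1 F d1 d2 -> forall k s, d2 * d2 < s -> Psi0 F k s = 0.
Proof.
  intros H k s Hs. pose proof H as (Hd1 & Hd12 & HF0 & HFd & Hlo & Hhi & Hb).
  unfold Psi0. apply linF_zero with (P := fun _ => True).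
  intros j _. simpl. apply (V1 _ _ _ _ H). apply sqrt_gt_d; lra.
  apply linF_dxn_all.
Qed.

Lemma Psi_low phi1 F d1 d2 : PhiHyp phi1 F d1 d2 -> forall k s, s < d1 * d1 -> Psi F k s = cc k.
Proof.
  intros H k s Hs. unfold Psi. destruct Rle_dec; auto. apply (Psi0_low _ _ _ _ H). lra.
Qed.

Lemma Psi_pos F k s : 0 < s -> Psi F k s = Psi0 F k s.
Proof. intros. unfold Psi. destruct Rle_dec; auto. lra. Qed.

Lemma Psi_high phi1 F d1 d2 : PhiHyp phi1 F d1 d2 -> forall k s, d2 * d2 < s -> Psi F k s = 0.
Proof.
  intros H k s Hs. pose proof H as (Hd1 & Hd12 & _).
  rewrite Psi_pos by nra. apply (Psi0_high _ _ _ _ H). auto.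
Qed.

Lemma Psi0_der phi1 F d1 d2 : PhiHyp phi1 F d1 d2 -> forall k s, 0 < s ->
  derivable_pt_lim (Psi0 F k) s (Psi0 F (S k) s).
Proof.
  intros H k s Hs. pose proof H as (Hd1 & Hd12 & HF0 & HFd & Hlo & Hhi & Hb).
  unfold Psi0. simpl dxn. apply dx_ok.
  - intros j. simpl. apply HFd. apply sqrt_lt_R0; auto.
  - intros i. apply Gs_der; auto.
Qed.

Lemma Psi_der phi1 F d1 d2 : PhiHyp phi1 F d1 d2 -> forall k s,
  derivable_pt_lim (Psi F k) s (Psi F (S k) s).
Proof.
  intros H k s. pose proof H as (Hd1 & Hd12 & HF0 & HFd & Hlo & Hhi & Hb).
  destruct (Rlt_dec s (d1 * d1)).
  - rewrite (Psi_low _ _ _ _ H) by auto. simpl cc.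
    apply (derivable_pt_lim_locally_ext (fun _ => cc k) _ s (s - 1) (d1 * d1)). lra.
    intros z Hz. symmetry. apply (Psi_low _ _ _ _ H). lra.
    apply derivable_pt_lim_const.
  - assert (0 < s) by nra. rewrite Psi_pos by auto.
    apply (derivable_pt_lim_locally_ext (Psi0 F k) _ s 0 (s + 1)). lra.
    intros z Hz. symmetry. apply Psi_pos. lra.
    apply (Psi0_der _ _ _ _ H); auto.
Qed.

Lemma Psi_bnd_ex phi1 F d1 d2 : PhiHyp phi1 F d1 d2 -> forall k,
  exists M, 0 <= M /\ forall s, Rabs (Psi F k s) <= M.
Proof.
  intros H k. pose proof H as (Hd1 & Hd12 & HF0 & HFd & Hlo & Hhi & Hb).
  destruct (continuity_ab_maj (fun s => Rabs (Psi0 F k s)) (d1 * d1) (d2 * d2)) as [Mx [HM _]].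
  nra.
  { intros c Hc. apply (continuity_pt_comp (Psi0 F k) Rabs). 
    apply derivable_continuous_pt. exists (Psi0 F (S k) c). apply (Psi0_der _ _ _ _ H). nra.
    apply Rcontinuity_abs. }
  exists (1 + Rabs (Psi0 F k Mx)). split. pose proof (Rabs_pos (Psi0 F k Mx)); lra.
  intros s. pose proof (Rabs_pos (Psi0 F k Mx)).
  destruct (Rlt_dec s (d1 * d1)).
  - rewrite (Psi_low _ _ _ _ H) by auto. destruct k; simpl; rewrite ?Rabs_R1, ?Rabs_R0; lra.
  - destruct (Rlt_dec (d2 * d2) s).
    + rewrite (Psi_high _ _ _ _ H) by auto. rewrite Rabs_R0; lra.
    + rewrite Psi_pos by nra. specialize (HM s ltac:(lra)). lra.
Qed.

Definition MPsi phi1 F d1 d2 (H : PhiHyp phi1 F d1 d2) (k : nat) : R :=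
  proj1_sig (constructive_indefinite_description _ (Psi_bnd_ex phi1 F d1 d2 H k)).

Lemma MPsi_spec phi1 F d1 d2 (H : PhiHyp phi1 F d1 d2) k :
  0 <= MPsi phi1 F d1 d2 H k /\ forall s, Rabs (Psi F k s) <= MPsi phi1 F d1 d2 H k.
Proof. unfold MPsi. destruct constructive_indefinite_description; simpl; auto. Qed.

Lemma Psi_0_eq phi1 F d1 d2 : PhiHyp phi1 F d1 d2 -> forall s, 0 <= s -> Psi F 0 s = phi1 (sqrt s).
Proof.
  intros H s Hs. pose proof H as (Hd1 & Hd12 & HF0 & HFd & Hlo & Hhi & Hb).
  unfold Psi. destruct Rle_dec.
  - assert (s = 0) by lra. subst. rewrite sqrt_0. simpl. symmetry; apply Hlo; lra.
  - unfold Psi0; simpl. auto.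
Qed.

Definition Gq (a c : R) (i : nat) (s : R) : R :=
  match i with O => a + (c + s) ^ 2 | 1%nat => 2 * (c + s) | 2%nat => 2 | _ => 0 end.

Lemma Gq_der a c i s : derivable_pt_lim (Gq a c i) s (Gq a c (S i) s).
Proof.
  apply is_derive_Reals. destruct i as [|[|[|i]]].
  - change (Gq a c 0) with (fun s => a + (c + s) ^ 2). change (Gq a c 1 s) with (2 * (c + s)).
    auto_derive; auto. simpl. match goal with |- ?a = ?b => change (@eq R a b) end. ring.
  - change (Gq a c 1) with (fun s => 2 * (c + s)). change (Gq a c 2 s) with 2.
    auto_derive; auto. match goal with |- ?a = ?b => change (@eq R a b) end. ring.
  - change (Gq a c 2) with (fun s : R => 2). change (Gq a c 3 s) with 0.
    auto_derive; auto.
  - change (Gq a c (S (S (S i)))) with (fun s : R => 0). change (Gq a c (S (S (S (S i)))) s) with 0.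
    auto_derive; auto.
Qed.

Definition U F a c k s := ev (Psi F) (Gq a c) (dxn k) s.

Lemma U_der phi1 F d1 d2 : PhiHyp phi1 F d1 d2 -> forall a c k s,
  derivable_pt_lim (U F a c k) s (U F a c (S k) s).
Proof.
  intros H a c k s. unfold U. simpl dxn. apply dx_ok.
  - intros j. apply (Psi_der _ _ _ _ H).
  - intros i. apply Gq_der.
Qed.

Definition Gam d2 := d2 * d2 + 2 * d2 + 2.

Definition MU phi1 F d1 d2 (H : PhiHyp phi1 F d1 d2) k :=
  eb (MPsi phi1 F d1 d2 H) (fun _ => Gam d2) (dxn k).

Lemma MU_nonneg phi1 F d1 d2 (H : PhiHyp phi1 F d1 d2) k : 0 <= MU phi1 F d1 d2 H k.
Proof.
  pose proof H as (Hd1 & Hd12 & _). unfold MU. apply eb_nonneg.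
  intros j; apply (MPsi_spec _ _ _ _ H). intros; unfold Gam; nra.
Qed.

Lemma U_bnd phi1 F d1 d2 (H : PhiHyp phi1 F d1 d2) a c k s : 0 <= a ->
  Rabs (U F a c k s) <= MU phi1 F d1 d2 H k.
Proof.
  intros Ha. pose proof H as (Hd1 & Hd12 & _).
  destruct (Rlt_dec (d2 * d2) (a + (c + s) ^ 2)).
  - unfold U. rewrite (linF_zero (fun _ => True) (Psi F) (Gq a c) s).
    rewrite Rabs_R0. apply MU_nonneg.
    intros j _. simpl. apply (Psi_high _ _ _ _ H). auto.
    apply linF_dxn_all.
  - unfold U, MU. apply eb_ok.
    + intros j. apply (MPsi_spec _ _ _ _ H).
    + assert (Hcs : - d2 <= c + s <= d2) by (split; nra).
      intros [|[|[|i]]]; unfold Gq, Gam; apply Rabs_le; split; nra.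
Qed.

Lemma U_0 phi1 F d1 d2 (H : PhiHyp phi1 F d1 d2) a c s : 0 <= a ->
  U F a c 0 s = phi1 (sqrt (a + (c + s) ^ 2)).
Proof.
  intros Ha. unfold U. simpl. apply (Psi_0_eq _ _ _ _ H). pose proof (Rle_0_sqr (c+s)). unfold Rsqr in *. lra.
Qed.

Definition Dh (h : R) (v : R -> R) : R -> R := fun s => v s - v (s + h).
Fixpoint DhL (h : R) (L : nat) (v : R -> R) : R -> R :=
  match L with O => v | S L' => Dh h (DhL h L' v) end.

Lemma DhL_comm h L v s : DhL h L (Dh h v) s = Dh h (DhL h L v) s.
Proof.
  revert s; induction L; intros s; simpl; auto.
  unfold Dh at 1. rewrite !IHL. reflexivity.
Qed.

Lemma DhL_bound h L : forall (v : R -> R) (V : nat -> R -> R) M,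
  (forall t, V 0%nat t = v t) -> (forall k t, derivable_pt_lim (V k) t (V (S k) t)) ->
  (forall t, Rabs (V L t) <= M) -> forall s, Rabs (DhL h L v s) <= Rabs h ^ L * M.
Proof.
  induction L; intros v V M H0 Hd HM s.
  - simpl. rewrite <- H0. specialize (HM s). lra.
  - change (DhL h (S L) v s) with (Dh h (DhL h L v) s). rewrite <- DhL_comm.
    specialize (IHL (Dh h v) (fun k t => V k t - V k (t + h)) (Rabs h * M)).
    replace (Rabs h ^ S L * M) with (Rabs h ^ L * (Rabs h * M)) by (simpl; ring). apply IHL.
    + intros t. unfold Dh. rewrite !H0. reflexivity.
    + intros k t. cbv beta. apply (derivable_pt_lim_minus (V k) (fun t => V k (t + h))).
      apply Hd.
      replace (V (S k) (t + h)) with (V (S k) (t + h) * 1) by ring.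
      apply (derivable_pt_lim_comp (fun t => t + h) (V k)).
      replace 1 with (1 + 0) by ring. apply (derivable_pt_lim_plus id (fun _ => h)).
      apply derivable_pt_lim_id. apply derivable_pt_lim_const. apply Hd.
    + intros t. cbv beta. rewrite (Rmult_comm (Rabs h) M).
      replace (Rabs h) with (Rabs (t - (t + h))).
      2:{ rewrite <- Rabs_Ropp. f_equal; ring. }
      apply (Lip1 (V L) (V (S L))). apply Hd. apply HM.
Qed.

Definition sqsum (x : list R) : R := fold_right (fun a s => a * a + s) 0 x.

Lemma sqsum_nonneg x : 0 <= sqsum x.
Proof. induction x; simpl; try lra. pose proof (Rle_0_sqr a). unfold Rsqr in *. lra. Qed.

Lemma euclid_sq x : euclid_norm x = sqrt (sqsum x).
Proof. reflexivity. Qed.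

Lemma sqsum_shift i x : (i < length x)%nat -> exists a, 0 <= a /\
  forall s, sqsum (shiftc i s x) = a + (nth i x 0 + s) ^ 2.
Proof.
  revert i; induction x; intros [|i] Hi; simpl in Hi; try lia.
  - exists (sqsum x). split. apply sqsum_nonneg. intros s. simpl. ring.
  - destruct (IHx i ltac:(lia)) as [b [Hb Hs]]. exists (a * a + b). split.
    pose proof (Rle_0_sqr a). unfold Rsqr in *. lra.
    intros s. simpl. rewrite Hs. simpl. ring.
Qed.

Definition gph (phi1 : R -> R) (x : list R) : R := phi1 (euclid_norm x).

Definition Dlt i h (w : list R -> R) (x : list R) : R := w x - w (shiftc i h x).
Fixpoint DltL i h L (w : list R -> R) : list R -> R :=
  match L with O => w | S L' => Dlt i h (DltL i h L' w) end.

Lemma DltL_shift i h L w x : forall s, DltL i h L w (shiftc i s x) = DhL h L (fun s => w (shiftc i s x)) s.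
Proof.
  induction L; intros s; simpl; auto.
  unfold Dlt, Dh. rewrite shiftc_comp. rewrite !IHL. reflexivity.
Qed.

Lemma DltL_bound phi1 F d1 d2 (H : PhiHyp phi1 F d1 d2) i h L x : (i < length x)%nat ->
  Rabs (DltL i h L (gph phi1) x) <= Rabs h ^ L * MU phi1 F d1 d2 H L.
Proof.
  intros Hi. destruct (sqsum_shift i x Hi) as [a [Ha Hs]].
  rewrite <- (shiftc_0 i x) at 1. rewrite DltL_shift.
  apply (DhL_bound h L _ (U F a (nth i x 0))).
  - intros t. rewrite (U_0 _ _ _ _ H) by auto. unfold gph. rewrite euclid_sq, Hs. reflexivity.
  - intros; apply (U_der _ _ _ _ H).
  - intros; apply U_bnd; auto.
Qed.

Lemma sqsum_ge x b : In b x -> b * b <= sqsum x.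
Proof.
  induction x; simpl; [tauto|]. intros [->|Hin]. pose proof (sqsum_nonneg x); lra.
  pose proof (IHx Hin). pose proof (Rle_0_sqr a). unfold Rsqr in *. lra.
Qed.

Lemma sqsum_tri x y Y : length x = length y -> 0 <= Y -> (forall b, In b y -> Rabs b <= Y) ->
  sqsum x <= sqsum y + 2 * Y * ldist x y + ldist x y * ldist x y.
Proof.
  revert y; induction x; intros [|b y] Hl HY Hb; simpl in *; try lia; try lra.
  specialize (IHx y ltac:(lia) HY (fun c Hc => Hb c (or_intror Hc))).
  pose proof (Hb b (or_introl eq_refl)) as Hbb.
  pose proof (ldist_nonneg x y). pose proof (Rabs_pos (a - b)).
  assert (a * a <= b * b + 2 * Y * Rabs (a - b) + Rabs (a - b) * Rabs (a - b)).
  { replace (Rabs (a - b) * Rabs (a - b)) with ((a - b) * (a - b)).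
    2:{ rewrite <- Rabs_mult. rewrite Rabs_right; auto. pose proof (Rle_0_sqr (a-b)). unfold Rsqr in *; lra. }
    replace (a * a) with (b * b + 2 * b * (a - b) + (a - b) * (a - b)) by ring.
    assert (b * (a - b) <= Y * Rabs (a - b)).
    { eapply Rle_trans. apply Rle_abs. rewrite Rabs_mult. apply Rmult_le_compat_r; auto. }
    lra. }
  nra.
Qed.

Lemma norm_tri x y : length x = length y -> sqrt (sqsum x) <= sqrt (sqsum y) + ldist x y.
Proof.
  intros Hl. set (Y := sqrt (sqsum y)).
  assert (HY : 0 <= Y) by apply sqrt_pos.
  assert (Hb : forall b, In b y -> Rabs b <= Y).
  { intros b Hin. unfold Y. rewrite <- sqrt_Rsqr_abs. apply sqrt_le_1_alt.
    unfold Rsqr. apply sqsum_ge; auto. }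
  pose proof (sqsum_tri x y Y Hl HY Hb).
  pose proof (ldist_nonneg x y).
  rewrite <- (sqrt_square (Y + ldist x y)) by lra. apply sqrt_le_1_alt.
  assert (Y * Y = sqsum y) by (unfold Y; apply sqrt_sqrt, sqsum_nonneg). nra.
Qed.

Lemma norm_lip x y : length x = length y -> Rabs (sqrt (sqsum x) - sqrt (sqsum y)) <= ldist x y.
Proof.
  intros Hl. pose proof (norm_tri x y Hl). pose proof (norm_tri y x (eq_sym Hl)).
  assert (ldist y x = ldist x y).
  { clear -Hl. revert y Hl; induction x; intros [|b y] Hl; simpl in *; auto; try lia.
    rewrite IHx by lia. rewrite <- Rabs_Ropp. f_equal. f_equal. ring. }
  apply Rabs_le. split; lra.
Qed.

Lemma phi_lip phi1 F d1 d2 (H : PhiHyp phi1 F d1 d2) a b : 0 <= a -> 0 <= b ->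
  Rabs (phi1 a - phi1 b) <= MU phi1 F d1 d2 H 1 * Rabs (a - b).
Proof.
  intros Ha Hb.
  assert (E : forall t, 0 <= t -> phi1 t = U F 0 0 0 t).
  { intros t Ht. rewrite (U_0 _ _ _ _ H) by lra. f_equal.
    replace (0 + (0 + t) ^ 2) with (t * t) by ring. rewrite sqrt_square; auto. }
  rewrite !E by auto. apply (Lip1 _ (U F 0 0 1)).
  intros; apply (U_der _ _ _ _ H). intros; apply U_bnd; lra.
Qed.

Lemma phi_bnd phi1 F d1 d2 (H : PhiHyp phi1 F d1 d2) t : 0 <= t -> Rabs (phi1 t) <= 1.
Proof.
  intros Ht. pose proof H as (_ & _ & _ & _ & _ & _ & Hb). destruct (Hb t Ht).
  rewrite Rabs_right; lra.
Qed.

Lemma LipB_g phi1 F d1 d2 (H : PhiHyp phi1 F d1 d2) n : LipB n (gph phi1) (MU phi1 F d1 d2 H 1) 1.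
Proof.
  split; [apply MU_nonneg|split].
  - intros x _. apply (phi_bnd _ _ _ _ H). apply sqrt_pos.
  - intros x y Hx Hy. unfold gph. rewrite !euclid_sq.
    eapply Rle_trans. apply (phi_lip _ _ _ _ H); apply sqrt_pos.
    apply Rmult_le_compat_l. apply MU_nonneg. apply norm_lip. lia.
Qed.

Lemma LipB_Dlt n w K B i h : LipB n w K B -> LipB n (Dlt i h w) (2 * K) (2 * B).
Proof.
  intros Hw. pose proof (LipB_shift n w K B i h Hw) as Hs.
  pose proof (LipB_plus _ _ _ _ _ _ _ Hw (LipB_scal _ _ _ _ (-1) Hs)) as Hp.
  rewrite Rabs_m1 in Hp. replace (2 * K) with (K + 1 * K) by ring. replace (2 * B) with (B + 1 * B) by ring.
  destruct Hp as [p0 [p1 p2]]. split; [auto|split].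
  - intros x Hx. unfold Dlt. replace (w x - w (shiftc i h x)) with (w x + -1 * w (shiftc i h x)) by ring. auto.
  - intros x y Hx Hy. unfold Dlt.
    replace (w x - w (shiftc i h x) - (w y - w (shiftc i h y)))
      with (w x + -1 * w (shiftc i h x) - (w y + -1 * w (shiftc i h y))) by ring. auto.
Qed.

Lemma LipB_DltL n w K B i h L : LipB n w K B -> LipB n (DltL i h L w) (2 ^ L * K) (2 ^ L * B).
Proof.
  induction L; intros Hw; simpl.
  - replace (1 * K) with K by ring. replace (1 * B) with B by ring. auto.
  - rewrite !Rmult_assoc. apply LipB_Dlt. auto.
Qed.

Lemma nth_sqsum i x : (i < length x)%nat -> nth i x 0 * nth i x 0 <= sqsum x.
Proof. intros Hi. apply sqsum_ge. apply nth_In. auto. Qed.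

Lemma g_supp phi1 F d1 d2 (H : PhiHyp phi1 F d1 d2) i x : (i < length x)%nat ->
  d2 < Rabs (nth i x 0) -> gph phi1 x = 0.
Proof.
  intros Hi Hx. pose proof H as (Hd1 & Hd12 & HF0 & HFd & Hlo & Hhi & Hb).
  unfold gph. apply Hhi. rewrite euclid_sq. rewrite <- (sqrt_Rsqr_abs (nth i x 0)) in Hx.
  eapply Rlt_le_trans. apply Hx. apply sqrt_le_1_alt. unfold Rsqr. apply nth_sqsum; auto.
Qed.

Lemma DltL_supp phi1 F d1 d2 (H : PhiHyp phi1 F d1 d2) i h L : forall x, (i < length x)%nat ->
  (forall k, (k <= L)%nat -> d2 < Rabs (nth i x 0 + INR k * h)) -> DltL i h L (gph phi1) x = 0.
Proof.
  induction L; intros x Hi Hk; simpl.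
  - apply (g_supp _ _ _ _ H i); auto. specialize (Hk 0%nat ltac:(lia)). simpl in Hk.
    rewrite Rmult_0_l, Rplus_0_r in Hk. auto.
  - unfold Dlt. rewrite IHL; auto. rewrite IHL. ring.
    rewrite shiftc_length; auto.
    intros k Hkl. rewrite shiftc_nth by auto. specialize (Hk (S k) ltac:(lia)).
    rewrite S_INR in Hk. replace (nth i x 0 + h + INR k * h) with (nth i x 0 + (INR k + 1) * h) by ring. auto.
Qed.

Definition TrHyp (tr : R -> R) : Prop :=
  (forall a, tr (a + PI) = - tr a) /\
  (forall n p, length p = n -> LipB n (fun x => tr (dotZR p x)) (sumabs p) 1).

Lemma TrHyp_cos : TrHyp cos.
Proof. split. apply neg_cos. apply LipB_cosdot. Qed.
Lemma TrHyp_sin : TrHyp sin.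
Proof. split. apply neg_sin. apply LipB_sindot. Qed.

Lemma LipB_rebound n f K B B' : LipB n f K B -> (forall x, length x = n -> Rabs (f x) <= B') -> LipB n f K B'.
Proof. intros [a [b c]] H; split; [|split]; auto. Qed.

Lemma half_step n tr p i h w K B : TrHyp tr -> length p = n -> (i < n)%nat ->
  IZR (nth i p 0%Z) * h = PI -> Rabs h <= PI -> LipB n w K B ->
  (forall x, length x = n -> PI - Rabs h <= Rabs (nth i x 0) -> w x = 0) ->
  integ_cube n (fun x => Dlt i h w x * tr (dotZR p x)) = 2 * integ_cube n (fun x => w x * tr (dotZR p x)).
Proof.
  intros [Htr HL] Hp Hi Hph Hh Hw Hv.
  destruct (IP_all n) as [I1 [I2 I3]].
  pose proof (HL n p Hp) as Lt.
  pose proof (LipB_mult _ _ _ _ _ _ _ Hw Lt) as L1.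
  pose proof (LipB_mult _ _ _ _ _ _ _ (LipB_shift _ _ _ _ i h Hw) Lt) as L2.
  assert (EA : integ_cube n (fun x => w x * tr (dotZR p x)) =
               -1 * integ_cube n (fun x => w (shiftc i h x) * tr (dotZR p x))).
  { rewrite (shift_integ n i h _ _ _ Hi Hh L1).
    rewrite <- (I3 _ _ _ _ L2). apply integ_ext. intros x Hx.
    rewrite dot_shift by lia. rewrite Hph, Htr. ring.
    intros x Hx Hx2. rewrite Hv; auto. ring. }
  rewrite (integ_ext n _ (fun x => w x * tr (dotZR p x) + (-1) * (w (shiftc i h x) * tr (dotZR p x)))).
  2:{ intros x _. unfold Dlt. ring. }
  rewrite (I2 _ _ _ _ _ _ L1 (LipB_scal _ _ _ _ (-1) L2)).
  rewrite (I3 _ _ _ _ L2). rewrite <- EA. ring.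
Qed.

Lemma iter_step phi1 F d1 d2 (H : PhiHyp phi1 F d1 d2) n tr p i h L :
  TrHyp tr -> length p = n -> (i < n)%nat ->
  IZR (nth i p 0%Z) * h = PI -> Rabs h <= PI -> INR L * Rabs h < PI - d2 ->
  forall j, (j <= L)%nat ->
  integ_cube n (fun x => gph phi1 x * tr (dotZR p x)) =
  (/ 2) ^ j * integ_cube n (fun x => DltL i h j (gph phi1) x * tr (dotZR p x)).
Proof.
  intros Htr Hp Hi Hph Hh HL. induction j; intros Hj.
  - simpl. ring.
  - rewrite IHj by lia. simpl DltL.
    rewrite (half_step n tr p i h (DltL i h j (gph phi1)) _ _ Htr Hp Hi Hph Hh
              (LipB_DltL n _ _ _ i h j (LipB_g _ _ _ _ H n))).
    simpl pow. field.
    intros x Hx Hxi. apply (DltL_supp _ _ _ _ H); [lia|].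
    intros k Hk.
    assert (INR (S k) <= INR L) by (apply le_INR; lia). rewrite S_INR in *.
    pose proof (Rabs_triang_inv (nth i x 0) (- (INR k * h))).
    replace (nth i x 0 - - (INR k * h)) with (nth i x 0 + INR k * h) in * by ring.
    rewrite Rabs_Ropp, Rabs_mult, (Rabs_right (INR k)) in * by (apply Rle_ge, pos_INR).
    pose proof (Rabs_pos h). nra.
Qed.

Definition maxabs (p : list Z) : R := fold_right (fun z m => Rmax (Rabs (IZR z)) m) 0 p.

Lemma maxabs_nonneg p : 0 <= maxabs p.
Proof. induction p; simpl. lra. eapply Rle_trans. apply IHp. apply Rmax_r. Qed.

Lemma maxabs_ge p i : (i < length p)%nat -> Rabs (IZR (nth i p 0%Z)) <= maxabs p.
Proof.
  revert i; induction p; intros [|i] Hi; simpl in *; try lia.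
  apply Rmax_l. eapply Rle_trans. apply IHp; lia. apply Rmax_r.
Qed.

Lemma maxabs_att p : (0 < length p)%nat -> exists i, (i < length p)%nat /\ Rabs (IZR (nth i p 0%Z)) = maxabs p.
Proof.
  induction p; simpl; intros Hl; try lia.
  destruct p as [|b q].
  - exists 0%nat. split. simpl; lia. simpl. unfold Rmax. destruct Rle_dec; auto.
    pose proof (Rabs_pos (IZR a)). lra.
  - destruct IHp as [j [Hj Hj2]]. simpl; lia.
    change (maxabs (a :: b :: q)) with (Rmax (Rabs (IZR a)) (maxabs (b :: q))).
    rewrite <- Hj2. unfold Rmax at 1. destruct Rle_dec.
    + exists (S j). split. simpl in *; lia. reflexivity.
    + exists 0%nat. split. simpl; lia. reflexivity.
Qed.

Lemma le_div_pow x d y L : 0 < y -> x * y ^ L <= d -> x <= d / y ^ L.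
Proof.
  intros Hy H. pose proof (pow_lt y L Hy). apply Rmult_le_reg_r with (y ^ L); auto.
  unfold Rdiv. rewrite Rmult_assoc, Rinv_l by lra. lra.
Qed.

Lemma decay phi1 F d1 d2 (H : PhiHyp phi1 F d1 d2) n tr : TrHyp tr -> d2 < PI -> (0 < n)%nat ->
  forall L, exists D, 0 <= D /\ forall p, length p = n ->
    Rabs (integ_cube n (fun x => gph phi1 x * tr (dotZR p x))) <= D / (1 + maxabs p) ^ L.
Proof.
  intros Htr Hd2 Hn L. pose proof H as (Hd1 & Hd12 & _).
  pose proof PI_RGT_0 as HPI. pose proof TPI_pos.
  set (T := INR L * PI / (PI - d2) + 1).
  assert (HT : 1 <= T).
  { unfold T. assert (0 <= INR L * PI / (PI - d2)).
    apply Rmult_le_pos. apply Rmult_le_pos; [apply pos_INR|lra]. left; apply Rinv_0_lt_compat; lra. lra. }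
  set (M := MU phi1 F d1 d2 H L).
  assert (HM : 0 <= M) by apply MU_nonneg.
  exists (TPI ^ n * (M * PI ^ L + (1 + T) ^ L)). split.
  { apply Rmult_le_pos. apply pow_le; lra. apply Rplus_le_le_0_compat.
    apply Rmult_le_pos; auto. apply pow_le; lra. apply pow_le; lra. }
  intros p Hp. set (Q := maxabs p). pose proof (maxabs_nonneg p) as HQ. fold Q in HQ.
  destruct (IP_all n) as [I1 [I2 I3]].
  pose proof (LipB_mult _ _ _ _ _ _ _ (LipB_g _ _ _ _ H n) (proj2 Htr n p Hp)) as Lg.
  apply le_div_pow. lra.
  destruct (Rlt_dec Q T) as [HQT|HQT].
  -
    eapply Rle_trans. apply Rmult_le_compat_r. apply pow_le; lra. apply (I1 _ _ _ Lg).
    rewrite Rmult_1_r. rewrite Rmult_plus_distr_l.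
    assert ((1 + Q) ^ L <= (1 + T) ^ L) by (apply pow_incr; lra).
    assert (0 <= TPI ^ n * (M * PI ^ L)).
    { apply Rmult_le_pos. apply pow_le; lra. apply Rmult_le_pos; auto. apply pow_le; lra. }
    assert (0 <= TPI ^ n) by (apply pow_le; lra). nra.
  -
    destruct (maxabs_att p) as [i [Hi HiQ]]. lia. fold Q in HiQ.
    set (a := IZR (nth i p 0%Z)) in *.
    assert (HQ1 : 1 <= Q) by lra.
    assert (Ha : a <> 0). { intro E. rewrite E, Rabs_R0 in HiQ. lra. }
    set (h := PI / a).
    assert (Hh : Rabs h = PI / Q).
    { unfold h. unfold Rdiv. rewrite Rabs_mult, Rabs_inv, Rabs_right by lra. rewrite HiQ. reflexivity. }
    assert (Hah : a * h = PI) by (unfold h; field; auto).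
    assert (Hhpi : Rabs h <= PI).
    { rewrite Hh. unfold Rdiv. rewrite <- (Rmult_1_r PI) at 2. apply Rmult_le_compat_l. lra.
      rewrite <- Rinv_1. apply Rinv_le_contravar; lra. }
    assert (HLh : INR L * Rabs h < PI - d2).
    { rewrite Hh. unfold T in HQT.
      assert (INR L * PI / (PI - d2) < Q) by lra.
      apply Rmult_lt_reg_r with (Q / (PI - d2)). apply Rdiv_lt_0_compat; lra.
      replace (INR L * (PI / Q) * (Q / (PI - d2))) with (INR L * PI / (PI - d2)) by (field; lra).
      replace ((PI - d2) * (Q / (PI - d2))) with Q by (field; lra). auto. }
    rewrite (iter_step _ _ _ _ H n tr p i h L Htr Hp ltac:(lia) Hah Hhpi HLh L (le_n L)).
    assert (Lg2 : LipB n (fun x => DltL i h L (gph phi1) x * tr (dotZR p x)) (2 ^ L * 1 * sumabs p + 1 * (2 ^ L * MU phi1 F d1 d2 H 1)) (Rabs h ^ L * M)).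
    { eapply LipB_rebound. apply (LipB_mult _ _ _ _ _ _ _ (LipB_DltL _ _ _ _ i h L (LipB_g _ _ _ _ H n)) (proj2 Htr n p Hp)).
      intros x Hx. rewrite Rabs_mult. rewrite <- (Rmult_1_r (Rabs h ^ L * M)).
      apply Rmult_le_compat. apply Rabs_pos. apply Rabs_pos.
      apply (DltL_bound _ _ _ _ H). lia. apply (proj2 Htr n p Hp). auto. }
    rewrite Rabs_mult. rewrite Rabs_right by (apply Rle_ge, pow_le; lra).
    eapply Rle_trans. apply Rmult_le_compat_r. apply pow_le; lra.
    apply Rmult_le_compat_l. apply pow_le; lra. apply (I1 _ _ _ Lg2).
    rewrite Hh.
    assert (E : (/ 2) ^ L * (TPI ^ n * ((PI / Q) ^ L * M)) * (1 + Q) ^ L =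
                TPI ^ n * M * (PI * (1 + Q) / (2 * Q)) ^ L).
    { replace (PI * (1 + Q) / (2 * Q)) with (/ 2 * (PI / Q) * (1 + Q)) by (field; lra).
      rewrite !Rpow_mult_distr. ring. }
    rewrite E.
    assert ((PI * (1 + Q) / (2 * Q)) ^ L <= PI ^ L).
    { apply pow_incr. split. apply Rmult_le_pos. nra. left; apply Rinv_0_lt_compat; lra.
      apply Rmult_le_reg_r with (2 * Q). lra. unfold Rdiv. rewrite Rmult_assoc, Rinv_l by lra. nra. }
    assert (0 <= TPI ^ n * M) by (apply Rmult_le_pos; auto; apply pow_le; lra).
    assert (0 <= TPI ^ n * (1 + T) ^ L) by (apply Rmult_le_pos; apply pow_le; lra).
    nra.
Qed.

Lemma Rsum_app l1 l2 : Rsum (l1 ++ l2) = Rsum l1 + Rsum l2.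
Proof. induction l1; simpl; [ring|rewrite IHl1; ring]. Qed.

Lemma Rsum_plus {A} (f g : A -> R) l : Rsum (map (fun m => f m + g m) l) = Rsum (map f l) + Rsum (map g l).
Proof. induction l; simpl; [ring|rewrite IHl; ring]. Qed.

Lemma Rsum_minus {A} (f g : A -> R) l : Rsum (map (fun m => f m - g m) l) = Rsum (map f l) - Rsum (map g l).
Proof. induction l; simpl; [ring|rewrite IHl; ring]. Qed.

Lemma Rsum_scal {A} (f : A -> R) c l : Rsum (map (fun m => c * f m) l) = c * Rsum (map f l).
Proof. induction l; simpl; [ring|rewrite IHl; ring]. Qed.

Lemma Rsum_ext {A} (f g : A -> R) l : (forall m, In m l -> f m = g m) -> Rsum (map f l) = Rsum (map g l).
Proof. induction l; simpl; intros H; auto. rewrite H, IHl; auto. Qed.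

Lemma Rsum_le {A} (f g : A -> R) l : (forall m, In m l -> f m <= g m) -> Rsum (map f l) <= Rsum (map g l).
Proof. induction l; simpl; intros H. lra. apply Rplus_le_compat; auto. Qed.

Lemma Rsum_nonneg {A} (f : A -> R) l : (forall m, In m l -> 0 <= f m) -> 0 <= Rsum (map f l).
Proof. induction l; simpl; intros H. lra. apply Rplus_le_le_0_compat; auto. Qed.

Lemma Rsum_abs {A} (f : A -> R) l : Rabs (Rsum (map f l)) <= Rsum (map (fun m => Rabs (f m)) l).
Proof.
  induction l; simpl. rewrite Rabs_R0; lra.
  eapply Rle_trans. apply Rabs_triang. lra.
Qed.

Lemma Rsum_filter {A} (f : A -> R) (P : A -> bool) l :
  Rsum (map f (filter P l)) = Rsum (map (fun m => if P m then f m else 0) l).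
Proof. induction l; simpl; auto. destruct (P a); simpl; rewrite IHl; ring. Qed.

Lemma Rsum_flat_map {A} (G : list A -> R) (Bx : list (list A)) (Rg : list A) :
  Rsum (map G (flat_map (fun z => map (cons z) Bx) Rg)) =
  Rsum (map (fun z => Rsum (map (fun m => G (z :: m)) Bx)) Rg).
Proof.
  induction Rg; simpl; auto. rewrite map_app, Rsum_app, IHRg, map_map. reflexivity.
Qed.

Lemma Rsum_sq_le (l : list R) : (forall x, In x l -> 0 <= x) ->
  Rsum (map (fun x => x * x) l) <= Rsum l * Rsum l.
Proof.
  induction l; simpl; intros H. lra.
  assert (0 <= Rsum l). { clear IHl. induction l; simpl in *. lra.
    assert (0 <= a0) by (apply H; auto). assert (0 <= Rsum l) by (apply IHl; intros; apply H; tauto). lra. }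
  assert (0 <= a) by auto. specialize (IHl (fun x Hx => H x (or_intror Hx))). nra.
Qed.

Lemma Rsum_swap {A B} (F : A -> B -> R) (l1 : list A) (l2 : list B) :
  Rsum (map (fun a => Rsum (map (fun b => F a b) l2)) l1) =
  Rsum (map (fun b => Rsum (map (fun a => F a b) l1)) l2).
Proof.
  induction l1; simpl.
  - induction l2; simpl; auto. rewrite <- IHl2. ring.
  - rewrite IHl1. rewrite <- Rsum_plus. reflexivity.
Qed.

Definition rng (K : nat) : list Z := map (fun i => (Z.of_nat i - Z.of_nat K)%Z) (seq 0 (2 * K + 1)).

Lemma rng_S K : rng (S K) = (- Z.of_nat (S K))%Z :: rng K ++ [Z.of_nat (S K)].
Proof.
  unfold rng. replace (2 * S K + 1)%nat with (S ((2 * K + 1) + 1)) by lia.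
  rewrite <- cons_seq. rewrite seq_app. simpl map. f_equal.
  rewrite map_app. f_equal.
  - rewrite <- seq_shift, map_map. apply map_ext. intros. rewrite Zpos_P_of_succ_nat. lia.
  - cbn [map]. f_equal. rewrite ?Zpos_P_of_succ_nat. lia.
Qed.

Lemma rng_ext k K (H : Z -> R) : (k <= K)%nat -> (forall z, (Z.of_nat k < Z.abs z)%Z -> H z = 0) ->
  Rsum (map H (rng K)) = Rsum (map H (rng k)).
Proof.
  intros Hk Hz. induction K.
  - replace k with 0%nat by lia. auto.
  - destruct (Nat.eq_dec k (S K)). subst; auto.
    rewrite rng_S. simpl. rewrite map_app, Rsum_app. simpl.
    rewrite !Hz by lia. rewrite IHK by lia. ring.
Qed.

Lemma Rsum_box_ext N : forall (G : list Z -> R) k K, (k <= K)%nat ->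
  (forall m, G m <> 0 -> List.Forall (fun z => (Z.abs z <= Z.of_nat k)%Z) m) ->
  Rsum (map G (box N K)) = Rsum (map G (box N k)).
Proof.
  induction N; intros G k K Hk HG; simpl; auto.
  rewrite !Rsum_flat_map.
  rewrite (Rsum_ext _ (fun z => Rsum (map (fun m => G (z :: m)) (box N k)))).
  2:{ intros z _. apply (IHN (fun m => G (z :: m))); auto.
      intros m Hm. specialize (HG _ Hm). inversion HG; auto. }
  fold (rng K). fold (rng k).
  apply rng_ext; auto. intros z Hz.
  induction (box N k); simpl; auto. rewrite IHl.
  destruct (Req_dec (G (z :: a)) 0) as [E|E]. rewrite E; ring.
  exfalso. specialize (HG _ E). inversion HG. lia.
Qed.

Lemma box_len N K m : In m (box N K) -> length m = N.
Proof.
  revert m; induction N; simpl; intros m Hm.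
  - destruct Hm as [<-|[]]; auto.
  - apply in_flat_map in Hm. destruct Hm as [z [_ Hz]]. apply in_map_iff in Hz.
    destruct Hz as [m' [<- Hm']]. simpl. f_equal. auto.
Qed.

Lemma sqnormZ_bound m k : (sqnormZ m < Z.of_nat k)%Z -> List.Forall (fun z => (Z.abs z <= Z.of_nat k)%Z) m.
Proof.
  induction m; simpl; intros H; constructor.
  - assert (0 <= sqnormZ m)%Z.
    { clear. induction m; simpl; nia. }
    nia.
  - apply IHm. assert (0 <= a * a)%Z by nia. lia.
Qed.

Lemma ball_sum N k K (f : list Z -> R) : (k <= K)%nat ->
  Rsum (map f (ball N k)) =
  Rsum (map (fun m => if Z.ltb (sqnormZ m) (Z.of_nat k) then f m else 0) (box N K)).
Proof.
  intros Hk. unfold ball. rewrite Rsum_filter. symmetry. apply Rsum_box_ext; auto.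
  intros m Hm. destruct (Z.ltb_spec (sqnormZ m) (Z.of_nat k)). apply sqnormZ_bound; auto. lra.
Qed.

Lemma sqnormZ_nonneg m : (0 <= sqnormZ m)%Z.
Proof. induction m; simpl; nia. Qed.

Lemma ball_diff N j K (f : list Z -> R) : (S j <= K)%nat ->
  Rsum (map f (ball N (S j))) - Rsum (map f (ball N j)) =
  Rsum (map (fun m => if Z.eqb (sqnormZ m) (Z.of_nat j) then f m else 0) (box N K)).
Proof.
  intros Hj. rewrite (ball_sum N (S j) K) by auto. rewrite (ball_sum N j K) by lia.
  rewrite <- Rsum_minus. apply Rsum_ext. intros m _.
  destruct (Z.ltb_spec (sqnormZ m) (Z.of_nat (S j))), (Z.ltb_spec (sqnormZ m) (Z.of_nat j)),
    (Z.eqb_spec (sqnormZ m) (Z.of_nat j)); try ring; lia.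
Qed.

Definition tau (u : R) : R := u / (1 + Rabs u).

Lemma tau_bnd u : -1 <= tau u <= 1.
Proof.
  unfold tau. pose proof (Rabs_pos u). split.
  - apply Rmult_le_reg_r with (1 + Rabs u). lra. unfold Rdiv. rewrite Rmult_assoc, Rinv_l by lra.
    unfold Rabs in *; destruct Rcase_abs; lra.
  - apply Rmult_le_reg_r with (1 + Rabs u). lra. unfold Rdiv. rewrite Rmult_assoc, Rinv_l by lra.
    unfold Rabs in *; destruct Rcase_abs; lra.
Qed.

Definition w1 (z : Z) : R := / (1 + Rabs (IZR z)) ^ 2.

Lemma w1_pos z : 0 < w1 z.
Proof. unfold w1. apply Rinv_0_lt_compat. apply pow_lt. pose proof (Rabs_pos (IZR z)). lra. Qed.

Lemma tel_step (u : Z) : w1 u <= 2 * (tau (IZR u + 1) - tau (IZR u)).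
Proof.
  unfold w1, tau. destruct (Z_le_gt_dec 0 u) as [Hu|Hu].
  - apply IZR_le in Hu. rewrite !Rabs_right by lra.
    set (x := IZR u) in *.
    assert (E : 2 * ((x + 1) / (1 + (x + 1)) - x / (1 + x)) - / (1 + x) ^ 2 = x / ((x + 1) ^ 2 * (x + 2)))
      by (field; lra).
    assert (0 <= x / ((x + 1) ^ 2 * (x + 2))).
    { apply Rmult_le_pos; auto. left. apply Rinv_0_lt_compat. apply Rmult_lt_0_compat. apply pow_lt; lra. lra. }
    lra.
  - assert (Hu' : IZR u <= -1) by (apply IZR_le; lia).
    rewrite Rabs_left by lra. rewrite (Rabs_left1 (IZR u + 1)) by lra.
    set (x := IZR u) in *.
    assert (E : 2 * ((x + 1) / (1 + - (x + 1)) - x / (1 + - x)) - / (1 + - x) ^ 2 = (2 - x) / ((- x) * (1 - x) ^ 2))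
      by (field; lra).
    assert (0 <= (2 - x) / ((- x) * (1 - x) ^ 2)).
    { apply Rmult_le_pos. lra. left. apply Rinv_0_lt_compat. apply Rmult_lt_0_compat. lra. apply pow_lt; lra. }
    lra.
Qed.

Lemma tel_sum L (a : Z) :
  Rsum (map (fun i => w1 (Z.of_nat i + a)) (seq 0 L)) <= 2 * (tau (IZR a + INR L) - tau (IZR a)).
Proof.
  induction L.
  - simpl. rewrite Rplus_0_r. lra.
  - rewrite seq_S, map_app, Rsum_app, S_INR.
    replace (Rsum (map (fun i => w1 (Z.of_nat i + a)) [(0 + L)%nat])) with (w1 (Z.of_nat L + a)) by (simpl; ring).
    pose proof (tel_step (Z.of_nat L + a)). rewrite plus_IZR, <- INR_IZR_INZ in H. replace (IZR a + (INR L + 1)) with (INR L + IZR a + 1) by ring.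
    replace (IZR a + INR L) with (INR L + IZR a) in IHL by ring. lra.
Qed.

Lemma rng_w1 K b : Rsum (map (fun z => w1 (z - b)) (rng K)) <= 4.
Proof.
  unfold rng. rewrite map_map.
  rewrite (Rsum_ext _ (fun i => w1 (Z.of_nat i + (- Z.of_nat K - b)))).
  2:{ intros; f_equal; lia. }
  eapply Rle_trans. apply tel_sum.
  pose proof (tau_bnd (IZR (- Z.of_nat K - b) + INR (2 * K + 1))).
  pose proof (tau_bnd (IZR (- Z.of_nat K - b))). lra.
Qed.

Fixpoint zsub (m n : list Z) : list Z :=
  match m, n with a :: m', b :: n' => (a - b)%Z :: zsub m' n' | _, _ => nil end.

Definition wt (p : list Z) : R := fold_right (fun z acc => w1 z * acc) 1 p.

Lemma wt_pos p : 0 < wt p.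
Proof. induction p; simpl. lra. apply Rmult_lt_0_compat; auto. apply w1_pos. Qed.

Lemma box_wt N : forall n K, length n = N ->
  Rsum (map (fun m => wt (zsub m n)) (box N K)) <= 4 ^ N.
Proof.
  induction N; intros n K Hn.
  - simpl. destruct n; simpl in *; try lia. lra.
  - destruct n as [|b n']; simpl in Hn; try lia. simpl box. rewrite Rsum_flat_map.
    simpl zsub. simpl wt.
    rewrite (Rsum_ext _ (fun z => w1 (z - b) * Rsum (map (fun m => wt (zsub m n')) (box N K)))).
    2:{ intros z _. rewrite <- Rsum_scal. reflexivity. }
    apply Rle_trans with (Rsum (map (fun z => w1 (z - b) * 4 ^ N) (rng K))).
    apply Rsum_le. intros z _. apply Rmult_le_compat_l. left; apply w1_pos. apply IHN; lia.
    fold (rng K). rewrite (Rsum_ext _ (fun z => 4 ^ N * w1 (z - b))) by (intros; ring).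
    rewrite Rsum_scal. simpl. pose proof (rng_w1 K b). pose proof (pow_le 4 N ltac:(lra)). nra.
Qed.

Lemma zsub_len m n : length m = length n -> length (zsub m n) = length m.
Proof. revert n; induction m; intros [|b n] H; simpl in *; auto; lia. Qed.

Lemma dot_zsub m n x : length m = length x -> length n = length x ->
  dotZR m x - dotZR n x = dotZR (zsub m n) x.
Proof.
  revert m n; induction x; intros [|a0 m] [|b n] Hm Hn; simpl in *; try lia.
  - unfold dotZR; simpl; ring.
  - rewrite !dotZR_cons. rewrite <- IHx by lia. rewrite minus_IZR. ring.
Qed.

Lemma wt_ge p : / (1 + maxabs p) ^ (2 * length p) <= wt p.
Proof.
  induction p.
  - simpl. lra.
  - change (wt (a :: p)) with (w1 a * wt p).
    change (maxabs (a :: p)) with (Rmax (Rabs (IZR a)) (maxabs p)).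
    change (length (a :: p)) with (S (length p)).
    pose proof (maxabs_nonneg p). pose proof (Rabs_pos (IZR a)).
    set (Q := Rmax (Rabs (IZR a)) (maxabs p)).
    assert (HQ1 : Rabs (IZR a) <= Q) by apply Rmax_l.
    assert (HQ2 : maxabs p <= Q) by apply Rmax_r.
    replace (2 * S (length p))%nat with (2 + 2 * length p)%nat by lia.
    rewrite pow_add, Rinv_mult.
    apply Rmult_le_compat.
    + left; apply Rinv_0_lt_compat, pow_lt; lra.
    + left; apply Rinv_0_lt_compat, pow_lt; lra.
    + unfold w1. apply Rinv_le_contravar. apply pow_lt; lra. apply pow_incr; lra.
    + eapply Rle_trans; [|apply IHp]. apply Rinv_le_contravar. apply pow_lt; lra. apply pow_incr; lra.
Qed.

Lemma ldist_zsub m n : length m = length n ->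
  ldist (map IZR m) (map IZR n) <= INR (length m) * maxabs (zsub m n).
Proof.
  revert n; induction m; intros [|b n] H; try (simpl in *; lia).
  - simpl. lra.
  - specialize (IHm n ltac:(simpl in H; lia)).
    change (ldist (map IZR (a :: m)) (map IZR (b :: n))) with (Rabs (IZR a - IZR b) + ldist (map IZR m) (map IZR n)).
    change (maxabs (zsub (a :: m) (b :: n))) with (Rmax (Rabs (IZR (a - b))) (maxabs (zsub m n))).
    change (length (a :: m)) with (S (length m)). rewrite S_INR.
    set (Q := Rmax (Rabs (IZR (a - b))) (maxabs (zsub m n))).
    assert (HQ1 : Rabs (IZR (a - b)) <= Q) by apply Rmax_l.
    assert (HQ2 : maxabs (zsub m n) <= Q) by apply Rmax_r.
    rewrite minus_IZR in HQ1. pose proof (pos_INR (length m)). nra.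
Qed.

Lemma allz_maxabs p : allz p = true -> maxabs p = 0.
Proof.
  induction p; simpl; auto. intros H. apply andb_prop in H. destruct H as [H1 H2].
  apply Z.eqb_eq in H1. subst. rewrite IHp by auto. rewrite Rabs_R0. unfold Rmax. destruct Rle_dec; lra.
Qed.

Lemma Csum_fst l x : fst (Csum (map (fun m => Cexpi (dotZR m x)) l)) = Rsum (map (fun m => cos (dotZR m x)) l).
Proof. induction l; simpl; auto. rewrite <- IHl. reflexivity. Qed.
Lemma Csum_snd l x : snd (Csum (map (fun m => Cexpi (dotZR m x)) l)) = Rsum (map (fun m => sin (dotZR m x)) l).
Proof. induction l; simpl; auto. rewrite <- IHl. reflexivity. Qed.

Lemma integ_sum {A} n (f : A -> list R -> R) l :
  (forall m, In m l -> exists K B, LipB n (f m) K B) ->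
  (exists K B, LipB n (fun x => Rsum (map (fun m => f m x) l)) K B) /\
  integ_cube n (fun x => Rsum (map (fun m => f m x) l)) = Rsum (map (fun m => integ_cube n (f m)) l).
Proof.
  destruct (IP_all n) as [I1 [I2 I3]].
  induction l; intros H; simpl.
  - split. exists 0, 0. split; [lra|split].
    intros; rewrite Rabs_R0; lra.
    intros x y _ _. rewrite Rminus_0_r, Rabs_R0. lra.
    rewrite integ_zero. reflexivity.
  - destruct (H a (or_introl eq_refl)) as [K1 [B1 L1]].
    destruct IHl as [[K2 [B2 L2]] E]; [intros; apply H; simpl; auto|].
    split. exists (K1 + K2), (B1 + B2). apply LipB_plus; auto.
    rewrite (I2 _ _ _ _ _ _ L1 L2). rewrite E. reflexivity.
Qed.

Definition cN (N : nat) : R := / (2 * PI) ^ N.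

Definition Ac phi1 N p := integ_cube N (fun x => (1 - gph phi1 x) * cos (dotZR p x)).
Definition As phi1 N p := integ_cube N (fun x => (1 - gph phi1 x) * sin (dotZR p x)).

Lemma LipB_psi phi1 F d1 d2 (H : PhiHyp phi1 F d1 d2) n :
  exists K B, LipB n (fun x => 1 - gph phi1 x) K B.
Proof.
  pose proof (LipB_scal _ _ _ _ (-1) (LipB_g _ _ _ _ H n)) as L1.
  assert (L0 : LipB n (fun _ => 1) 0 1).
  { split; [lra|split]; intros. rewrite Rabs_R1; lra. rewrite Rminus_diag, Rabs_R0.
    pose proof (ldist_nonneg x y); lra. }
  pose proof (LipB_plus _ _ _ _ _ _ _ L0 L1) as L2.
  eexists; eexists. destruct L2 as [a [b c]]. split; [exact a|split].
  intros; replace (1 - gph phi1 x) with (1 + -1 * gph phi1 x) by ring; auto.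
  intros; replace (1 - gph phi1 x - (1 - gph phi1 y)) with (1 + -1 * gph phi1 x - (1 + -1 * gph phi1 y)) by ring; auto.
Qed.

Lemma Theta_coef_eq phi1 F d1 d2 (H : PhiHyp phi1 F d1 d2) N j n K : length n = N -> (S j <= K)%nat ->
  Theta_coef N phi1 j n =
  (cN N * Rsum (map (fun m => if Z.eqb (sqnormZ m) (Z.of_nat j) then cN N * Ac phi1 N (zsub m n) else 0) (box N K)),
   cN N * Rsum (map (fun m => if Z.eqb (sqnormZ m) (Z.of_nat j) then cN N * As phi1 N (zsub m n) else 0) (box N K))).
Proof.
  intros Hn Hj. destruct (LipB_psi _ _ _ _ H N) as [Kp [Bp Lp]].
  set (a := fun m => if Z.eqb (sqnormZ m) (Z.of_nat j) then cN N else 0).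
  assert (Ha : forall m t, (if Z.eqb (sqnormZ m) (Z.of_nat j) then cN N * t else 0) = a m * t).
  { intros m t. unfold a. destruct Z.eqb; ring. }
  unfold Theta_coef. cbv zeta. unfold Cscal at 1. simpl fst. simpl snd. f_equal; f_equal.
  - rewrite (integ_ext N _ (fun x => Rsum (map (fun m => a m * ((1 - gph phi1 x) * cos (dotZR (zsub m n) x))) (box N K)))).
    + destruct (integ_sum N (fun m x => a m * ((1 - gph phi1 x) * cos (dotZR (zsub m n) x))) (box N K)) as [_ E].
      { intros m Hm. do 2 eexists. apply LipB_scal. apply LipB_mult. exact Lp.
        apply LipB_cosdot. apply box_len in Hm. rewrite zsub_len; lia. }
      rewrite E. apply Rsum_ext. intros m Hm. rewrite Ha. apply box_len in Hm.
      destruct (IP_all N) as [_ [_ I3]].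
      eapply I3. apply LipB_mult. exact Lp. apply LipB_cosdot. rewrite zsub_len; lia.
    + intros x Hx. unfold Theta, theta_k, theta, Csub, Cscal, Cmul, psi. simpl.
      rewrite !Csum_fst, !Csum_snd. fold (gph phi1 x). unfold gph.
      rewrite cos_neg, sin_neg.
      transitivity ((1 - phi1 (euclid_norm x)) * cN N *
        (Rsum (map (fun m => cos (dotZR m x - dotZR n x)) (ball N (S j))) -
         Rsum (map (fun m => cos (dotZR m x - dotZR n x)) (ball N j)))).
      * rewrite (Rsum_ext (fun m => cos (dotZR m x - dotZR n x)) (fun m => cos (dotZR n x) * cos (dotZR m x) + sin (dotZR n x) * sin (dotZR m x)))
          by (intros; rewrite cos_minus; ring).
        rewrite (Rsum_ext (fun m => cos (dotZR m x - dotZR n x)) (fun m => cos (dotZR n x) * cos (dotZR m x) + sin (dotZR n x) * sin (dotZR m x)))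
          by (intros; rewrite cos_minus; ring).
        rewrite !Rsum_plus, !Rsum_scal. unfold cN. ring.
      * rewrite (ball_diff N j K) by auto. rewrite <- Rsum_scal. apply Rsum_ext.
        intros m Hm. apply box_len in Hm. rewrite dot_zsub by lia. unfold a.
        destruct Z.eqb; ring.
  - rewrite (integ_ext N _ (fun x => Rsum (map (fun m => a m * ((1 - gph phi1 x) * sin (dotZR (zsub m n) x))) (box N K)))).
    + destruct (integ_sum N (fun m x => a m * ((1 - gph phi1 x) * sin (dotZR (zsub m n) x))) (box N K)) as [_ E].
      { intros m Hm. do 2 eexists. apply LipB_scal. apply LipB_mult. exact Lp.
        apply LipB_sindot. apply box_len in Hm. rewrite zsub_len; lia. }
      rewrite E. apply Rsum_ext. intros m Hm. rewrite Ha. apply box_len in Hm.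
      destruct (IP_all N) as [_ [_ I3]].
      eapply I3. apply LipB_mult. exact Lp. apply LipB_sindot. rewrite zsub_len; lia.
    + intros x Hx. unfold Theta, theta_k, theta, Csub, Cscal, Cmul, psi. simpl.
      rewrite !Csum_fst, !Csum_snd. fold (gph phi1 x). unfold gph.
      rewrite cos_neg, sin_neg.
      transitivity ((1 - phi1 (euclid_norm x)) * cN N *
        (Rsum (map (fun m => sin (dotZR m x - dotZR n x)) (ball N (S j))) -
         Rsum (map (fun m => sin (dotZR m x - dotZR n x)) (ball N j)))).
      * rewrite (Rsum_ext (fun m => sin (dotZR m x - dotZR n x)) (fun m => cos (dotZR n x) * sin (dotZR m x) + (- sin (dotZR n x)) * cos (dotZR m x)))
          by (intros; rewrite sin_minus; ring).
        rewrite (Rsum_ext (fun m => sin (dotZR m x - dotZR n x)) (fun m => cos (dotZR n x) * sin (dotZR m x) + (- sin (dotZR n x)) * cos (dotZR m x)))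
          by (intros; rewrite sin_minus; ring).
        rewrite !Rsum_plus, !Rsum_scal. unfold cN. ring.
      * rewrite (ball_diff N j K) by auto. rewrite <- Rsum_scal. apply Rsum_ext.
        intros m Hm. apply box_len in Hm. rewrite dot_zsub by lia. unfold a.
        destruct Z.eqb; ring.
Qed.

Lemma Ac_split phi1 F d1 d2 (H : PhiHyp phi1 F d1 d2) N p : length p = N ->
  Ac phi1 N p = integ_cube N (fun x => cos (dotZR p x)) - integ_cube N (fun x => gph phi1 x * cos (dotZR p x)).
Proof.
  intros Hp. destruct (IP_all N) as [I1 [I2 I3]].
  pose proof (LipB_cosdot N p Hp) as Lc.
  pose proof (LipB_mult _ _ _ _ _ _ _ (LipB_g _ _ _ _ H N) Lc) as Lg.
  unfold Ac. rewrite (integ_ext N _ (fun x => cos (dotZR p x) + -1 * (gph phi1 x * cos (dotZR p x)))).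
  rewrite (I2 _ _ _ _ _ _ Lc (LipB_scal _ _ _ _ (-1) Lg)), (I3 _ _ _ _ Lg). ring.
  intros; ring.
Qed.

Lemma As_split phi1 F d1 d2 (H : PhiHyp phi1 F d1 d2) N p : length p = N ->
  As phi1 N p = integ_cube N (fun x => sin (dotZR p x)) - integ_cube N (fun x => gph phi1 x * sin (dotZR p x)).
Proof.
  intros Hp. destruct (IP_all N) as [I1 [I2 I3]].
  pose proof (LipB_sindot N p Hp) as Lc.
  pose proof (LipB_mult _ _ _ _ _ _ _ (LipB_g _ _ _ _ H N) Lc) as Lg.
  unfold As. rewrite (integ_ext N _ (fun x => sin (dotZR p x) + -1 * (gph phi1 x * sin (dotZR p x)))).
  rewrite (I2 _ _ _ _ _ _ Lc (LipB_scal _ _ _ _ (-1) Lg)), (I3 _ _ _ _ Lg). ring.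
  intros; ring.
Qed.

Lemma A_bound N p L (I0 J D : R) : length p = N -> 0 <= D ->
  Rabs I0 <= (if allz p then TPI ^ N else 0) -> Rabs J <= D / (1 + maxabs p) ^ L ->
  Rabs (I0 - J) <= (TPI ^ N + D) / (1 + maxabs p) ^ L.
Proof.
  intros Hp HD HI HJ. pose proof (maxabs_nonneg p). pose proof TPI_pos.
  assert (HI0 : Rabs I0 <= TPI ^ N / (1 + maxabs p) ^ L).
  { destruct (allz p) eqn:E.
    - rewrite allz_maxabs by auto. rewrite Rplus_0_r, pow1. unfold Rdiv. rewrite Rinv_1, Rmult_1_r. auto.
    - eapply Rle_trans. apply HI. apply Rmult_le_pos. apply pow_le; lra. left; apply Rinv_0_lt_compat, pow_lt; lra. }
  eapply Rle_trans. apply Rabs_triang. rewrite Rabs_Ropp. unfold Rdiv in *. lra.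
Qed.

Definition shind (k : nat) (m : list Z) : R :=
  if Rle_dec (INR k) (euclid_normZ m) then if Rlt_dec (euclid_normZ m) (INR k + 1) then 1 else 0 else 0.

Lemma euclidZ_sq m : euclid_normZ m = sqrt (sqsum (map IZR m)).
Proof. reflexivity. Qed.

Lemma term_bound N (n m : list Z) (k l : nat) (A E0 : R) : length n = N -> length m = N -> 0 <= E0 ->
  Rabs A <= E0 / (1 + maxabs (zsub m n)) ^ (2 * N + l) ->
  shind k m * Rabs A <= E0 * (INR N + 2) ^ l / (1 + Rabs (euclid_normZ n - INR k)) ^ l * wt (zsub m n).
Proof.
  intros Hn Hm HE HA. set (p := zsub m n) in *. set (Q := maxabs p).
  set (d := Rabs (euclid_normZ n - INR k)).
  pose proof (maxabs_nonneg p) as HQ. fold Q in HQ.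
  assert (Hd : 0 <= d) by apply Rabs_pos.
  assert (Hw : 0 < wt p) by apply wt_pos.
  assert (HR : 0 <= E0 * (INR N + 2) ^ l / (1 + d) ^ l * wt p).
  { apply Rmult_le_pos; [|lra]. apply Rmult_le_pos. apply Rmult_le_pos; auto. apply pow_le.
    pose proof (pos_INR N); lra. left; apply Rinv_0_lt_compat, pow_lt; lra. }
  unfold shind. destruct Rle_dec as [H1|H1]; [destruct Rlt_dec as [H2|H2]|]; try (rewrite Rmult_0_l; auto).
  rewrite Rmult_1_l.
  assert (Hlp : length p = N) by (unfold p; rewrite zsub_len; lia).
  assert (Hwt : / (1 + Q) ^ (2 * N) <= wt p) by (pose proof (wt_ge p); rewrite Hlp in *; auto).
  assert (Hd2 : 1 + d <= (INR N + 2) * (1 + Q)).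
  { assert (Hmn : Rabs (euclid_normZ n - euclid_normZ m) <= INR N * Q).
    { rewrite Rabs_minus_sym. rewrite !euclidZ_sq. eapply Rle_trans. apply norm_lip. rewrite !length_map; lia.
      unfold Q, p. rewrite <- Hm. apply ldist_zsub. lia. }
    assert (Htri : d <= Rabs (euclid_normZ n - euclid_normZ m) + Rabs (euclid_normZ m - INR k)).
    { unfold d. replace (euclid_normZ n - INR k) with ((euclid_normZ n - euclid_normZ m) + (euclid_normZ m - INR k)) by ring.
      apply Rabs_triang. }
    rewrite (Rabs_right (euclid_normZ m - INR k)) in Htri by lra.
    pose proof (pos_INR N). assert (0 <= INR N * Q) by (apply Rmult_le_pos; lra).
    replace ((INR N + 2) * (1 + Q)) with (INR N + INR N * Q + 2 + 2 * Q) by ring. lra. }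
  eapply Rle_trans. apply HA.
  rewrite pow_add. unfold Rdiv. rewrite Rinv_mult.
  assert (Hx : / (1 + Q) ^ l <= (INR N + 2) ^ l * / (1 + d) ^ l).
  { apply Rmult_le_reg_r with ((1 + d) ^ l). apply pow_lt; lra.
    rewrite Rmult_assoc, Rinv_l by (apply pow_nonzero; lra). rewrite Rmult_1_r.
    apply Rmult_le_reg_l with ((1 + Q) ^ l). apply pow_lt; lra.
    rewrite <- Rmult_assoc, Rinv_r by (apply pow_nonzero; lra). rewrite Rmult_1_l.
    rewrite <- Rpow_mult_distr. apply pow_incr. lra. }
  assert (0 <= / (1 + Q) ^ (2 * N)) by (left; apply Rinv_0_lt_compat, pow_lt; lra).
  assert (0 <= / (1 + Q) ^ l) by (left; apply Rinv_0_lt_compat, pow_lt; lra).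
  assert (Y : / (1 + Q) ^ (2 * N) * / (1 + Q) ^ l <= wt p * ((INR N + 2) ^ l * / (1 + d) ^ l))
    by (apply Rmult_le_compat; auto).
  fold Q. apply Rle_trans with (E0 * (wt p * ((INR N + 2) ^ l * / (1 + d) ^ l))).
  apply Rmult_le_compat_l; auto. right; ring.
Qed.

Lemma Rsum_zero {A} (l : list A) : Rsum (map (fun _ => 0) l) = 0.
Proof. induction l; simpl; auto. rewrite IHl; ring. Qed.

Lemma count_le (S : list nat) t b : NoDup S -> 0 <= b ->
  Rsum (map (fun j => if Z.eqb t (Z.of_nat j) then b else 0) S) <=
  (if existsb (fun j => Z.eqb t (Z.of_nat j)) S then b else 0).
Proof.
  induction S; intros HS Hb; simpl. lra.
  inversion HS; subst.
  destruct (Z.eqb_spec t (Z.of_nat a)).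
  - simpl. rewrite (Rsum_ext _ (fun _ => 0)). rewrite Rsum_zero. lra.
    intros j Hj. destruct (Z.eqb_spec t (Z.of_nat j)); auto.
    exfalso. assert (j = a) by lia. subst; auto.
  - simpl. specialize (IHS H2 Hb). lra.
Qed.

Lemma sqsum_IZR m : sqsum (map IZR m) = IZR (sqnormZ m).
Proof. induction m; simpl; auto. rewrite IHm, plus_IZR, mult_IZR. reflexivity. Qed.

Lemma shell_bound k m b : 0 <= b ->
  Rsum (map (fun j => if Z.eqb (sqnormZ m) (Z.of_nat j) then b else 0) (shell k)) <= shind k m * b.
Proof.
  intros Hb. eapply Rle_trans. apply count_le; auto.
  unfold shell. apply NoDup_filter. apply seq_NoDup.
  destruct existsb eqn:E.
  - apply existsb_exists in E. destruct E as [j [Hj Hj2]].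
    apply Z.eqb_eq in Hj2. unfold shell in Hj. apply filter_In in Hj. destruct Hj as [_ Hj].
    assert (En : euclid_normZ m = sqrt (INR j)).
    { rewrite euclidZ_sq, sqsum_IZR, Hj2, <- INR_IZR_INZ. reflexivity. }
    unfold shind. rewrite En.
    destruct (Rle_dec (INR k) (sqrt (INR j))); [|discriminate].
    destruct (Rlt_dec (sqrt (INR j)) (INR k + 1)); [|discriminate]. lra.
  - unfold shind. destruct Rle_dec; [destruct Rlt_dec|]; lra.
Qed.

Lemma shell_lt k j : In j (shell k) -> (j < (k + 1) * (k + 1))%nat.
Proof. unfold shell. intros H. apply filter_In in H. destruct H as [H _]. apply in_seq in H. lia. Qed.

Theorem lemma2 (N : nat) (r Rr : R) (phi1 : R -> R)
  (HN : (2 <= N)%nat) (Hr : 0 < r) (HrR : r < Rr) (HRpi : Rr <= PI)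
  (Hsmooth : smooth_on (fun t => 0 < t) phi1)
  (Hchi : forall t, 0 <= t ->
     chi ((Rr - r) / 3) t <= phi1 t <= chi (2 * (Rr - r) / 3) t) :
  forall l : nat, exists Cl : R,
    forall (k : nat) (n : list Z), length n = N ->
      Rsum (map (fun j => Cnorm2 (Theta_coef N phi1 j n)) (shell k))
        <= Cl / (1 + Rabs (euclid_normZ n - INR k)) ^ l.
Proof.
  intros l.
  destruct Hsmooth as [F [HF0 HFd]].
  set (d1 := (Rr - r) / 3). set (d2 := 2 * (Rr - r) / 3).
  assert (H : PhiHyp phi1 F d1 d2).
  { unfold d1, d2 in *. refine (conj _ (conj _ (conj _ (conj _ (conj _ (conj _ _)))))).
    - lra.
    - lra.
    - auto.
    - intros; apply HFd; auto.
    - intros t Ht. destruct (Hchi t ltac:(lra)) as [A B]. unfold chi in A, B.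
      destruct (Rle_dec t ((Rr - r) / 3)); [|lra]. destruct (Rle_dec t (2 * (Rr - r) / 3)); lra.
    - intros t Ht. destruct (Hchi t ltac:(lra)) as [A B]. unfold chi in A, B.
      destruct (Rle_dec t ((Rr - r) / 3)); [lra|]. destruct (Rle_dec t (2 * (Rr - r) / 3)); lra.
    - intros t Ht. destruct (Hchi t Ht) as [A B]. unfold chi in A, B.
      destruct (Rle_dec t ((Rr - r) / 3)); destruct (Rle_dec t (2 * (Rr - r) / 3)); split; lra. }
  assert (Hd2 : d2 < PI) by (unfold d2; lra).
  assert (HN0 : (0 < N)%nat) by lia.
  destruct (decay _ _ _ _ H N cos TrHyp_cos Hd2 HN0 (2 * N + l)) as [Dc [HDc Hc]].
  destruct (decay _ _ _ _ H N sin TrHyp_sin Hd2 HN0 (2 * N + l)) as [Ds [HDs Hs]].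
  pose proof TPI_pos as HT.
  set (E0 := TPI ^ N + (Dc + Ds)).
  assert (HE0 : 0 <= E0) by (unfold E0; pose proof (pow_le TPI N ltac:(lra)); lra).
  set (E := E0 * (INR N + 2) ^ l).
  assert (HE : 0 <= E) by (unfold E; apply Rmult_le_pos; auto; apply pow_le; pose proof (pos_INR N); lra).
  set (c := cN N).
  assert (Hc0 : 0 < c) by (unfold c, cN; apply Rinv_0_lt_compat, pow_lt; pose proof PI_RGT_0; lra).
  set (Sc := E * 4 ^ N).
  assert (HS : 0 <= Sc) by (unfold Sc; apply Rmult_le_pos; auto; apply pow_le; lra).
  exists (2 * c ^ 4 * Sc ^ 2).
  intros k n Hn.
  set (d := Rabs (euclid_normZ n - INR k)).
  assert (Hd : 0 <= d) by apply Rabs_pos.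
  set (K := ((k + 1) * (k + 1))%nat).
  set (B := box N K).
  set (bA := fun m => c * Rabs (Ac phi1 N (zsub m n))).
  set (bB := fun m => c * Rabs (As phi1 N (zsub m n))).
  set (eA := fun j => Rsum (map (fun m => if Z.eqb (sqnormZ m) (Z.of_nat j) then bA m else 0) B)).
  set (eB := fun j => Rsum (map (fun m => if Z.eqb (sqnormZ m) (Z.of_nat j) then bB m else 0) B)).
  assert (HbA : forall m, 0 <= bA m) by (intros; unfold bA; apply Rmult_le_pos; [lra|apply Rabs_pos]).
  assert (HbB : forall m, 0 <= bB m) by (intros; unfold bB; apply Rmult_le_pos; [lra|apply Rabs_pos]).
  assert (HeA : forall j, 0 <= eA j) by (intros; apply Rsum_nonneg; intros; destruct Z.eqb; auto; lra).
  assert (HeB : forall j, 0 <= eB j) by (intros; apply Rsum_nonneg; intros; destruct Z.eqb; auto; lra).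
  assert (Step1 : forall j, In j (shell k) ->
    Cnorm2 (Theta_coef N phi1 j n) <= c ^ 2 * (eA j * eA j + eB j * eB j)).
  { intros j Hj. pose proof (shell_lt k j Hj) as Hjk.
    rewrite (Theta_coef_eq _ _ _ _ H N j n K Hn) by (unfold K; lia). fold c. fold B.
    unfold Cnorm2; simpl fst; simpl snd.
    set (X := Rsum (map (fun m => if Z.eqb (sqnormZ m) (Z.of_nat j) then c * Ac phi1 N (zsub m n) else 0) B)).
    set (Y := Rsum (map (fun m => if Z.eqb (sqnormZ m) (Z.of_nat j) then c * As phi1 N (zsub m n) else 0) B)).
    assert (HX : Rabs X <= eA j).
    { unfold X. eapply Rle_trans. apply Rsum_abs. apply Rsum_le. intros m _.
      destruct Z.eqb. unfold bA. rewrite Rabs_mult, Rabs_right by lra. lra. rewrite Rabs_R0; lra. }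
    assert (HY : Rabs Y <= eB j).
    { unfold Y. eapply Rle_trans. apply Rsum_abs. apply Rsum_le. intros m _.
      destruct Z.eqb. unfold bB. rewrite Rabs_mult, Rabs_right by lra. lra. rewrite Rabs_R0; lra. }
    assert (X * X <= eA j * eA j).
    { change (X * X) with (Rsqr X). rewrite Rsqr_abs. unfold Rsqr.
      apply Rmult_le_compat; auto using Rabs_pos. }
    assert (Y * Y <= eB j * eB j).
    { change (Y * Y) with (Rsqr Y). rewrite Rsqr_abs. unfold Rsqr.
      apply Rmult_le_compat; auto using Rabs_pos. }
    assert (0 <= c ^ 2) by (apply pow_le; lra).
    replace (c * X * (c * X) + c * Y * (c * Y)) with (c ^ 2 * (X * X + Y * Y)) by ring.
    apply Rmult_le_compat_l; auto. lra. }
  assert (Step2 : forall (bX : list Z -> R), (forall m, 0 <= bX m) ->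
     (forall m, In m B -> shind k m * bX m <= c * E / (1 + d) ^ l * wt (zsub m n)) ->
     Rsum (map (fun j => Rsum (map (fun m => if Z.eqb (sqnormZ m) (Z.of_nat j) then bX m else 0) B)) (shell k))
       <= c * Sc / (1 + d) ^ l).
  { intros bX HbX Hterm. rewrite Rsum_swap.
    apply Rle_trans with (Rsum (map (fun m => c * E / (1 + d) ^ l * wt (zsub m n)) B)).
    - apply Rsum_le. intros m Hm. eapply Rle_trans. apply shell_bound; auto. auto.
    - rewrite Rsum_scal. unfold Sc. 
      assert (0 <= c * E / (1 + d) ^ l).
      { apply Rmult_le_pos. apply Rmult_le_pos; lra. left; apply Rinv_0_lt_compat, pow_lt; lra. }
      pose proof (box_wt N n K Hn). fold B in H1.
      apply Rle_trans with (c * E / (1 + d) ^ l * 4 ^ N). apply Rmult_le_compat_l; auto.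
      right. unfold Rdiv. ring. }
  assert (HtermA : forall m, In m B -> shind k m * bA m <= c * E / (1 + d) ^ l * wt (zsub m n)).
  { intros m Hm. apply box_len in Hm. unfold bA.
    replace (shind k m * (c * Rabs (Ac phi1 N (zsub m n)))) with (c * (shind k m * Rabs (Ac phi1 N (zsub m n)))) by ring.
    replace (c * E / (1 + d) ^ l * wt (zsub m n)) with (c * (E / (1 + d) ^ l * wt (zsub m n))) by (unfold Rdiv; ring).
    apply Rmult_le_compat_l. lra. unfold E.
    assert (Hp : length (zsub m n) = N) by (rewrite zsub_len; lia).
    apply term_bound; auto.
    rewrite (Ac_split _ _ _ _ H) by auto. apply A_bound; auto. lra.
    rewrite (proj1 (cube_trig N (zsub m n) Hp)). destruct allz; [rewrite Rabs_right|rewrite Rabs_R0]; try lra.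
    apply Rle_ge, pow_le; lra.
    specialize (Hc (zsub m n) Hp). eapply Rle_trans. apply Hc. unfold Rdiv. apply Rmult_le_compat_r.
    left; apply Rinv_0_lt_compat, pow_lt; pose proof (maxabs_nonneg (zsub m n)); lra. lra. }
  assert (HtermB : forall m, In m B -> shind k m * bB m <= c * E / (1 + d) ^ l * wt (zsub m n)).
  { intros m Hm. apply box_len in Hm. unfold bB.
    replace (shind k m * (c * Rabs (As phi1 N (zsub m n)))) with (c * (shind k m * Rabs (As phi1 N (zsub m n)))) by ring.
    replace (c * E / (1 + d) ^ l * wt (zsub m n)) with (c * (E / (1 + d) ^ l * wt (zsub m n))) by (unfold Rdiv; ring).
    apply Rmult_le_compat_l. lra. unfold E.
    assert (Hp : length (zsub m n) = N) by (rewrite zsub_len; lia).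
    apply term_bound; auto.
    rewrite (As_split _ _ _ _ H) by auto. apply A_bound; auto. lra.
    rewrite (proj2 (cube_trig N (zsub m n) Hp)). rewrite Rabs_R0. destruct allz; try lra.
    apply pow_le; lra.
    specialize (Hs (zsub m n) Hp). eapply Rle_trans. apply Hs. unfold Rdiv. apply Rmult_le_compat_r.
    left; apply Rinv_0_lt_compat, pow_lt; pose proof (maxabs_nonneg (zsub m n)); lra. lra. }
  apply Rle_trans with (Rsum (map (fun j => c ^ 2 * (eA j * eA j + eB j * eB j)) (shell k))).
  apply Rsum_le. auto.
  rewrite Rsum_scal, Rsum_plus.
  pose proof (Rsum_sq_le (map eA (shell k))) as QA. rewrite map_map in QA.
  pose proof (Rsum_sq_le (map eB (shell k))) as QB. rewrite map_map in QB.
  pose proof (Step2 bA HbA HtermA) as SA. pose proof (Step2 bB HbB HtermB) as SB.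
  fold B in SA, SB.
  change (Rsum (map (fun j => Rsum (map (fun m => if (sqnormZ m =? Z.of_nat j)%Z then bA m else 0) B)) (shell k)))
    with (Rsum (map eA (shell k))) in SA.
  change (Rsum (map (fun j => Rsum (map (fun m => if (sqnormZ m =? Z.of_nat j)%Z then bB m else 0) B)) (shell k)))
    with (Rsum (map eB (shell k))) in SB.
  assert (PA : 0 <= Rsum (map eA (shell k))) by (apply Rsum_nonneg; auto).
  assert (PB : 0 <= Rsum (map eB (shell k))) by (apply Rsum_nonneg; auto).
  assert (QA' : Rsum (map (fun x => eA x * eA x) (shell k)) <= (c * Sc / (1 + d) ^ l) ^ 2).
  { eapply Rle_trans. apply QA. intros x Hx. apply in_map_iff in Hx. destruct Hx as [j [<- _]]. auto.
    simpl. rewrite Rmult_1_r. apply Rmult_le_compat; auto. }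
  assert (QB' : Rsum (map (fun x => eB x * eB x) (shell k)) <= (c * Sc / (1 + d) ^ l) ^ 2).
  { eapply Rle_trans. apply QB. intros x Hx. apply in_map_iff in Hx. destruct Hx as [j [<- _]]. auto.
    simpl. rewrite Rmult_1_r. apply Rmult_le_compat; auto. }
  assert (Hdl : 1 <= (1 + d) ^ l) by (apply pow_R1_Rle; lra).
  assert (Hdl0 : 0 < (1 + d) ^ l) by lra.
  assert (E2 : (c * Sc / (1 + d) ^ l) ^ 2 = c ^ 2 * Sc ^ 2 / (1 + d) ^ l * / (1 + d) ^ l) by (field; lra).
  assert (Hc2 : 0 <= c ^ 2) by (apply pow_le; lra).
  apply Rle_trans with (c ^ 2 * (2 * (c * Sc / (1 + d) ^ l) ^ 2)).
  apply Rmult_le_compat_l; auto. lra.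
  rewrite E2.
  assert (0 <= c ^ 2 * Sc ^ 2 / (1 + d) ^ l).
  { apply Rmult_le_pos. apply Rmult_le_pos; auto. apply pow_le; auto. left; apply Rinv_0_lt_compat; auto. }
  assert (/ (1 + d) ^ l <= 1).
  { apply Rle_trans with (/ 1). apply Rinv_le_contravar; lra. rewrite Rinv_1; lra. }
  apply Rle_trans with (c ^ 2 * (2 * (c ^ 2 * Sc ^ 2 / (1 + d) ^ l))).
  apply Rmult_le_compat_l; auto. nra.
  right. unfold Rdiv. ring.
Qed.
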